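(* Let $k\ge2$ be an integer, $s_0\in(0,1)$, $i_0\in(0,1)$, $\tau,\eta,\lambda>0$, $f(v):=s_0(1-e^{-\tau v})-\eta v$ and $\mathscr{R}_0:=s_0\tau/\eta$. Assume $\mathscr{R}_0>1$ and $0<\lambda<\lambda_c$, where $\lambda_c:=\frac{\eta(\mathscr{R}_0-1)}{k+1-2\sqrt{k}}$. Define $$c_*^k:=\min_{\gamma>0}\frac{\eta(\mathscr{R}_0-1)+\lambda\left(e^{\gamma}-(k+1)+ke^{-\gamma}\right)}{\gamma}>0.$$ Let $(\mathcal{I}_n^\infty)_{n\ge1}$ be the unique positive bounded solution of $0=f(\mathcal{I}_n)+\lambda(\mathcal{I}_{n-1}-(k+1)\mathcal{I}_n+k\mathcal{I}_{n+1})$ for $n\ge2$, $0=f(\mathcal{I}_1)+i_0+\lambda(k+1)(-\mathcal{I}_1+\mathcal{I}_2)$, and let $(\mathcal{I}_n(t))_{n\ge1}$ solve $$\begin{cases}\mathcal{I}_n'(t)=f(\mathcal{I}_n(t))+\lambda\left(\mathcal{I}_{n-1}(t)-(k+1)\mathcal{I}_n(t)+k\mathcal{I}_{n+1}(t)\right), & n\ge2,\\ \mathcal{I}_1'(t)=f(\mathcal{I}_1(t))+i_0+\lambda(k+1)\left(-\mathcal{I}_1(t)+\mathcal{I}_2(t)\right),\end{cases}\qquad \mathcal{I}_n(0)=0\ \forall n\ge1.$$ Then: (i) for every $c\in(0,c_*^k)$, $\lim_{t\to+\infty}\sup_{1\le n\le ct}|\mathcal{I}_n(t)-\mathcal{I}_n^\infty|=0$;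 (ii) for every $c>c_*^k$, $\lim_{t\to+\infty}\sup_{n\ge ct}|\mathcal{I}_n(t)|=0$.
   Context: The system describes the cumulative density of infected individuals in an SIR model on the homogeneous tree of degree $k$ with infection initially only at the root, $\mathcal{I}_n$ being the common value at vertices at distance $n-1$ from the root. *)

(* Defs.v *)
From Stdlib Require Import Reals Lra.
From Coquelicot Require Import Coquelicot.
Open Scope R_scope.

Definition freact (s0 tau eta v : R) : R := s0 * (1 - exp (- tau * v)) - eta * v.

Definition repro (s0 tau eta : R) : R := s0 * tau / eta.

Definition lambda_c (k : nat) (s0 tau eta : R) : R :=
  eta * (repro s0 tau eta - 1) / (INR k + 1 - 2 * sqrt (INR k)).

Definition speed_fun (k : nat) (s0 tau eta lambda gamma : R) : R :=
  (eta * (repro s0 tau eta - 1)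
   + lambda * (exp gamma - (INR k + 1) + INR k * exp (- gamma))) / gamma.

(* c_*^k := min_{gamma > 0} speed_fun gamma, written as the infimum
   (the minimum when it is attained) *)
Definition c_star (k : nat) (s0 tau eta lambda : R) : R :=
  real (Glb_Rbar (fun y => exists gamma, 0 < gamma /\ y = speed_fun k s0 tau eta lambda gamma)).

(* Main.v *)
Require Import Defs.
From Stdlib Require Import Reals Lra Lia Classical.
From Coquelicot Require Import Coquelicot.
Open Scope R_scope.

Definition contw (g : R -> R) (T : R) := forall t, 0 <= t <= T -> forall eps, 0 < eps ->
  exists d, 0 < d /\ forall s, 0 <= s <= T -> Rabs (s - t) < d -> Rabs (g s - g t) < eps.

Lemma cont_pt_eps (f : R -> R) x : continuity_pt f x ->
  forall eps, 0 < eps -> exists d, 0 < d /\ forall y, Rabs (y - x) < d -> Rabs (f y - f x) < eps.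
Proof.
  intros H eps He. unfold continuity_pt, continue_in, limit1_in, limit_in in H.
  destruct (H eps He) as [a [Ha Hy]]. exists a; split; auto.
  intros y Hyx. destruct (Req_dec y x) as [->|Hne].
  - rewrite Rminus_diag, Rabs_R0; auto.
  - apply (Hy y). split. split; auto. exact I. simpl; unfold R_dist; auto.
Qed.

Lemma abs_sub_lt a b e1 e2 : Rabs a < e1 -> Rabs b < e2 -> Rabs (a - b) < e1 + e2.
Proof. intros. unfold Rminus. eapply Rle_lt_trans; [apply Rabs_triang|]. rewrite Rabs_Ropp. lra. Qed.

Lemma contw_minus (w p : R -> R) T : contw w T -> (forall t, continuity_pt p t) ->
  contw (fun t => w t - p t) T.
Proof.
  intros Hw Hp t Ht eps He.
  destruct (Hw t Ht (eps/2)) as [d1 [Hd1 H1]]; [lra|].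
  destruct (cont_pt_eps p t (Hp t) (eps/2)) as [d2 [Hd2 H2]]; [lra|].
  exists (Rmin d1 d2); split; [apply Rmin_pos; auto|].
  intros s Hs Hst.
  assert (A1 := H1 s Hs (Rlt_le_trans _ _ _ Hst (Rmin_l _ _))).
  assert (A2 := H2 s (Rlt_le_trans _ _ _ Hst (Rmin_r _ _))).
  replace (w s - p s - (w t - p t)) with ((w s - w t) - (p s - p t)) by ring.
  replace eps with (eps/2 + eps/2) by field. apply abs_sub_lt; auto.
Qed.

Lemma deriv_left_nonneg (h : R -> R) t d r : 0 < r ->
  derivable_pt_lim h t d -> (forall s, t - r < s < t -> h s < h t) -> 0 <= d.
Proof.
  intros Hr Hd Hs. destruct (Rle_or_lt 0 d) as [|Hneg]; auto.
  destruct (Hd (-d/2)) as [del Hdel]; [lra|].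
  pose proof (cond_pos del) as Hdp.
  set (hh := - (Rmin del r) / 2).
  assert (Hm : 0 < Rmin del r) by (apply Rmin_pos; auto).
  assert (Hhh : hh < 0) by (unfold hh; lra).
  assert (Hhh2 : Rabs hh < del).
  { rewrite Rabs_left by auto. unfold hh. pose proof (Rmin_l del r). lra. }
  specialize (Hdel hh (Rlt_not_eq _ _ Hhh) Hhh2).
  assert (Hlt : h (t + hh) < h t).
  { apply Hs. unfold hh. pose proof (Rmin_r del r). lra. }
  assert (Hq : 0 < (h (t + hh) - h t) / hh).
  { replace ((h (t + hh) - h t) / hh) with ((h t - h (t + hh)) * / (- hh)) by (field; lra).
    apply Rmult_lt_0_compat; [lra|apply Rinv_0_lt_compat; lra]. }
  rewrite Rabs_right in Hdel by lra. lra.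
Qed.

Lemma fin_cont (g : nat -> R -> R) T t : 0 <= t <= T ->
  forall N, (forall n, (1 <= n <= N)%nat -> contw (g n) T) ->
  (forall n, (1 <= n <= N)%nat -> g n t < 0) ->
  exists d, 0 < d /\ forall s, 0 <= s <= T -> Rabs (s - t) < d ->
     forall n, (1 <= n <= N)%nat -> g n s < 0.
Proof.
  intros Ht N. induction N as [|N IH]; intros Hc Hn.
  - exists 1; split; [lra|]. intros; lia.
  - destruct IH as [d1 [Hd1 H1]].
    + intros; apply Hc; lia.
    + intros; apply Hn; lia.
    + destruct (Hc (S N) ltac:(lia) t Ht (- g (S N) t)) as [d2 [Hd2 H2]].
      { specialize (Hn (S N) ltac:(lia)); lra. }
      exists (Rmin d1 d2); split; [apply Rmin_pos; auto|].
      intros s Hs Hst n Hnr.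
      destruct (Nat.eq_dec n (S N)) as [->|Hne].
      * assert (A := H2 s Hs (Rlt_le_trans _ _ _ Hst (Rmin_r _ _))).
        apply Rabs_def2 in A. lra.
      * apply H1; auto. eapply Rlt_le_trans; [apply Hst|apply Rmin_l]. lia.
Qed.

Lemma exp_ge1 x : 0 <= x -> 1 <= exp x.
Proof. intros. pose proof (exp_ineq1_le x). lra. Qed.

Lemma CP (L A C C1 T Bd : R) (u v : nat -> R -> R) :
  0 <= L -> 0 <= A -> 0 <= C -> 0 <= C1 -> 0 <= T ->
  (forall n t, (1 <= n)%nat -> 0 <= t <= T -> u n t - v n t <= Bd) ->
  (forall n, (1 <= n)%nat -> u n 0 <= v n 0) ->
  (forall n, (1 <= n)%nat -> contw (fun t => u n t - v n t) T) ->
  (forall n t, (1 <= n)%nat -> 0 < t <= T -> u n t > v n t ->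
     exists du dv, derivable_pt_lim (u n) t du /\ derivable_pt_lim (v n) t dv /\
     ((n = 1)%nat -> du - dv <= L * (u 1%nat t - v 1%nat t) + C1 * (u 2%nat t - v 2%nat t)) /\
     ((2 <= n)%nat -> du - dv <= L * (u n t - v n t) + A * (u (n - 1)%nat t - v (n - 1)%nat t)
                                  + C * (u (S n) t - v (S n) t))) ->
  forall n t, (1 <= n)%nat -> 0 <= t <= T -> u n t <= v n t.
Proof.
  intros HL HA HC HC1 HT HB H0 Hcont Hder.
  set (K := L + A + 2 * C + 2 * C1 + 1).
  assert (HK : 0 < K) by (unfold K; lra).
  set (w := fun n t => u n t - v n t).
  assert (Claim : forall eps, 0 < eps -> forall n t, (1 <= n)%nat -> 0 <= t <= T ->
            w n t < eps * exp (K * t) * (1 + INR n)).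
  { intros eps He.
    set (phi := fun n t => eps * exp (K * t) * (1 + INR n)).
    set (g := fun n t => w n t - phi n t).
    assert (Hphi_pos : forall n t, 0 < phi n t).
    { intros. unfold phi. pose proof (pos_INR n). pose proof (exp_pos (K*t)).
      apply Rmult_lt_0_compat; [apply Rmult_lt_0_compat|]; lra. }
    destruct (INR_archimed eps (Rabs Bd) He) as [N HN].
    assert (Htail : forall n t, (N < n)%nat -> 0 <= t <= T -> g n t < 0).
    { intros n t Hn Ht. unfold g, w, phi.
      assert (1 <= n)%nat by lia.
      specialize (HB n t H Ht).
      assert (INR N <= INR n) by (apply le_INR; lia).
      assert (1 <= exp (K * t)) by (apply exp_ge1; nra).
      assert (Rabs Bd >= Bd) by (apply Rle_ge, RRle_abs).
      assert (eps * (1 + INR n) <= eps * exp (K * t) * (1 + INR n)).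
      { rewrite (Rmult_comm eps (exp _)), Rmult_assoc.
        pose proof (pos_INR n). rewrite <- (Rmult_1_l (eps * (1 + INR n))) at 1.
        apply Rmult_le_compat_r; nra. }
      nra. }
    assert (Hgc : forall n, (1 <= n)%nat -> contw (g n) T).
    { intros n Hn. unfold g. apply (contw_minus (w n) (phi n) T (Hcont n Hn)).
      intros t. apply derivable_continuous_pt. unfold phi.
      apply derivable_pt_mult; [apply derivable_pt_mult|].
      - apply derivable_pt_const.
      - apply (derivable_pt_comp (fun t => K * t) exp).
        + apply derivable_pt_scal, derivable_pt_id.
        + apply derivable_pt_exp.
      - apply derivable_pt_const. }
    set (P := fun t => forall s, 0 <= s <= t -> forall n, (1 <= n <= N)%nat -> g n s < 0).
    set (E := fun t => 0 <= t <= T /\ P t).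
    assert (HP0 : forall n, (1 <= n)%nat -> g n 0 < 0).
    { intros n Hn. unfold g, w. specialize (H0 n Hn). specialize (Hphi_pos n 0). lra. }
    assert (HE0 : E 0).
    { split; [lra|]. intros s Hs n Hn. replace s with 0 by lra. apply HP0; lia. }
    destruct (completeness E) as [ts [Hub Hlub]].
    { exists T. intros x [Hx _]. lra. }
    { exists 0; auto. }
    assert (Hts0 : 0 <= ts) by (apply Hub; auto).
    assert (HtsT : ts <= T) by (apply Hlub; intros x [Hx _]; lra).
    assert (Hbelow : forall s, 0 <= s < ts -> P s).
    { intros s Hs. destruct (classic (P s)) as [|Hn]; auto. exfalso.
      assert (Hb : is_upper_bound E s).
      { intros x [Hx HPx]. destruct (Rle_or_lt x s) as [|Hlt]; auto.
        exfalso. apply Hn. intros s' Hs' n Hnn. apply HPx; [lra|auto]. }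
      specialize (Hlub s Hb). lra. }
    assert (HPT : P T).
    { destruct (classic (forall n, (1 <= n <= N)%nat -> g n ts < 0)) as [Hall|Hnot].
      - assert (HPts : P ts).
        { intros s Hs n Hn. destruct (Rle_lt_or_eq_dec s ts (proj2 Hs)) as [Hlt|Heq].
          + apply (Hbelow s); [lra|lra|auto].
          + subst s. apply Hall; auto. }
        destruct (Rle_lt_or_eq_dec ts T HtsT) as [Hlt|Heq].
        + exfalso.
          destruct (fin_cont g T ts ltac:(lra) N (fun n Hn => Hgc n ltac:(lia)) Hall)
            as [d [Hd Hfc]].
          set (s' := ts + Rmin d (T - ts) / 2).
          assert (Hm : 0 < Rmin d (T - ts)) by (apply Rmin_pos; lra).
          assert (Hs'E : E s').
          { split. unfold s'. pose proof (Rmin_r d (T - ts)). lra.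
            intros s Hs n Hn. destruct (Rle_or_lt s ts).
            - apply HPts; [lra|auto].
            - apply Hfc; auto. unfold s' in Hs. pose proof (Rmin_r d (T - ts)). lra.
              rewrite Rabs_right by lra. unfold s' in Hs. pose proof (Rmin_l d (T - ts)). lra. }
          specialize (Hub s' Hs'E). unfold s' in Hub. lra.
        + subst ts. auto.
      - exfalso. apply not_all_ex_not in Hnot. destruct Hnot as [n0 Hn0].
        apply imply_to_and in Hn0. destruct Hn0 as [Hn0r Hg0].
        apply Rnot_lt_le in Hg0.
        assert (Htsp : 0 < ts).
        { destruct (Rle_lt_or_eq_dec 0 ts Hts0) as [|Heq]; auto.
          rewrite <- Heq in Hg0. specialize (HP0 n0 ltac:(lia)). lra. }
        assert (Hle : forall m, (1 <= m)%nat -> g m ts <= 0).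
        { intros m Hm. destruct (Compare_dec.le_lt_dec m N) as [HmN|HmN].
          - apply Rnot_lt_le. intros Hpos.
            destruct (Hgc m Hm ts ltac:(lra) (g m ts) Hpos) as [d [Hd Hcd]].
            set (s := Rmax 0 (ts - d / 2)).
            assert (Hs1 : 0 <= s < ts).
            { unfold s. split. apply Rmax_l. apply Rmax_lub_lt; lra. }
            assert (Hs2 : Rabs (s - ts) < d).
            { assert (ts - d/2 <= s) by apply Rmax_r. rewrite Rabs_left by lra. lra. }
            specialize (Hcd s ltac:(lra) Hs2).
            assert (g m s < 0) by (apply (Hbelow s Hs1 s); [lra|lia]).
            apply Rabs_def2 in Hcd. lra.
          - left. apply Htail; [lia|lra]. }
        assert (Heq0 : g n0 ts = 0) by (specialize (Hle n0 ltac:(lia)); lra).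
        assert (Huv : u n0 ts > v n0 ts).
        { unfold g, w in Heq0. specialize (Hphi_pos n0 ts). lra. }
        destruct (Hder n0 ts ltac:(lia) ltac:(lra) Huv) as [du [dv [Hdu [Hdv [Hd1 Hd2]]]]].
        assert (Hdg : derivable_pt_lim (g n0) ts (du - dv - eps * (K * exp (K * ts)) * (1 + INR n0))).
        { unfold g, w, phi. apply derivable_pt_lim_minus; [apply derivable_pt_lim_minus; auto|].
          apply is_derive_Reals. auto_derive; auto. ring. }
        assert (Hnn := deriv_left_nonneg (g n0) ts _ ts Htsp Hdg).
        assert (Hgl : 0 <= du - dv - eps * (K * exp (K * ts)) * (1 + INR n0)).
        { apply Hnn. intros s Hs. rewrite Heq0. apply (Hbelow s ltac:(lra) s); [lra|lia]. }
        assert (Hw : forall m, (1 <= m)%nat -> w m ts <= phi m ts).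
        { intros m Hm. specialize (Hle m Hm). unfold g in Hle. lra. }
        assert (Hwn : w n0 ts = phi n0 ts) by (unfold g in Heq0; lra).
        assert (Hphi_form : forall m, phi m ts = eps * exp (K * ts) * (1 + INR m)) by reflexivity.
        assert (Hpe : 0 < eps * exp (K * ts)) by (apply Rmult_lt_0_compat; [lra|apply exp_pos]).
        destruct (Nat.eq_dec n0 1) as [E1|E1].
        + subst n0. specialize (Hd1 eq_refl).
          assert (H2 := Hw 2%nat ltac:(lia)).
          unfold w in Hwn, H2. rewrite Hwn in Hd1.
          unfold phi in Hd1, H2. simpl INR in *.
          assert (C1 * (u 2%nat ts - v 2%nat ts) <= C1 * (eps * exp (K * ts) * (1 + (1 + 1))))
            by (apply Rmult_le_compat_l; auto).
          replace (eps * (K * exp (K * ts)) * (1 + 1)) with (K * (eps * exp (K * ts)) * 2) in Hgl by ring.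
          set (Q := eps * exp (K * ts)) in *.
          assert (0 <= A * Q) by (apply Rmult_le_pos; lra).
          assert (0 <= C * Q) by (apply Rmult_le_pos; lra).
          assert (0 <= C1 * Q) by (apply Rmult_le_pos; lra).
          unfold K in Hgl. nra.
        + specialize (Hd2 ltac:(lia)).
          assert (H2 := Hw (n0 - 1)%nat ltac:(lia)).
          assert (H3 := Hw (S n0) ltac:(lia)).
          unfold w in Hwn, H2, H3. rewrite Hwn in Hd2.
          unfold phi in Hd2, H2, H3. rewrite minus_INR in H2 by lia. rewrite S_INR in H3.
          simpl INR in H2.
          assert (A * (u (n0 - 1)%nat ts - v (n0 - 1)%nat ts) <= A * (eps * exp (K * ts) * (1 + (INR n0 - 1))))
            by (apply Rmult_le_compat_l; auto).
          assert (C * (u (S n0) ts - v (S n0) ts) <= C * (eps * exp (K * ts) * (1 + (INR n0 + 1))))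
            by (apply Rmult_le_compat_l; auto).
          assert (1 <= INR n0) by (apply (le_INR 1); lia).
          replace (eps * (K * exp (K * ts)) * (1 + INR n0)) with (K * (eps * exp (K * ts)) * (1 + INR n0)) in Hgl by ring.
          set (Q := eps * exp (K * ts)) in *.
          assert (0 <= A * Q) by (apply Rmult_le_pos; lra).
          assert (0 <= C * Q) by (apply Rmult_le_pos; lra).
          assert (0 <= C1 * Q) by (apply Rmult_le_pos; lra).
          assert (0 <= L * Q) by (apply Rmult_le_pos; lra).
          set (m := INR n0) in *.
          unfold K in Hgl. nra. }
    intros n t Hn Ht. destruct (Compare_dec.le_lt_dec n N) as [HnN|HnN].
    - assert (g n t < 0) by (apply (HPT t Ht); lia). unfold g, phi in H. lra.
    - assert (g n t < 0) by (apply Htail; auto). unfold g, phi in H. lra. }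
  intros n t Hn Ht.
  apply Rnot_lt_le. intros Hlt.
  set (x := u n t - v n t).
  assert (Hx : 0 < x) by (unfold x; lra).
  set (D := exp (K * T) * (1 + INR n)).
  assert (HD : 0 < D).
  { unfold D. apply Rmult_lt_0_compat. apply exp_pos. pose proof (pos_INR n); lra. }
  specialize (Claim (x / (2 * D)) ltac:(apply Rdiv_lt_0_compat; lra) n t Hn Ht).
  assert (exp (K * t) <= exp (K * T)).
  { destruct (Rle_lt_or_eq_dec t T (proj2 Ht)) as [Hl| ->]; [|lra]. left. apply exp_increasing.
    apply Rmult_lt_compat_l; lra. }
  assert (x / (2 * D) * exp (K * t) * (1 + INR n) <= x / 2).
  { replace (x / 2) with (x / (2 * D) * D) by (field; lra).
    rewrite Rmult_assoc. apply Rmult_le_compat_l. left; apply Rdiv_lt_0_compat; lra.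
    unfold D. pose proof (pos_INR n). apply Rmult_le_compat_r; lra. }
  fold w in Claim. unfold w in Claim. fold x in Claim. lra.
Qed.

Definition Fop (k : nat) (s0 i0 tau eta lam : R) (x : nat -> R) (n : nat) : R :=
  match n with
  | 1%nat => freact s0 tau eta (x 1%nat) + i0 + lam * (INR k + 1) * (- x 1%nat + x 2%nat)
  | _ => freact s0 tau eta (x n) + lam * (x (n - 1)%nat - (INR k + 1) * x n + INR k * x (S n))
  end.

Lemma Fop_1 k s0 i0 tau eta lam x :
  Fop k s0 i0 tau eta lam x 1 = freact s0 tau eta (x 1%nat) + i0 + lam * (INR k + 1) * (- x 1%nat + x 2%nat).
Proof. reflexivity. Qed.

Lemma Fop_ge2 k s0 i0 tau eta lam x n : (2 <= n)%nat ->
  Fop k s0 i0 tau eta lam x n = freact s0 tau eta (x n) + lam * (x (n - 1)%nat - (INR k + 1) * x n + INR k * x (S n)).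
Proof. intros H. destruct n as [|[|n]]; try lia. reflexivity. Qed.

Lemma exp_convex p a b : 0 <= p <= 1 -> exp (p * a + (1 - p) * b) <= p * exp a + (1 - p) * exp b.
Proof.
  intros Hp. set (m := p * a + (1 - p) * b).
  assert (Ha : exp m * (1 + (a - m)) <= exp a).
  { replace a with (m + (a - m)) at 2 by ring. rewrite exp_plus.
    apply Rmult_le_compat_l; [left; apply exp_pos|apply exp_ineq1_le]. }
  assert (Hb : exp m * (1 + (b - m)) <= exp b).
  { replace b with (m + (b - m)) at 2 by ring. rewrite exp_plus.
    apply Rmult_le_compat_l; [left; apply exp_pos|apply exp_ineq1_le]. }
  assert (exp m = p * (exp m * (1 + (a - m))) + (1 - p) * (exp m * (1 + (b - m)))).
  { unfold m. ring. }
  nra.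
Qed.

Lemma f_lip s0 tau eta B x y : 0 < s0 -> 0 < tau -> 0 < eta -> 0 <= B -> -B <= y -> y < x ->
  freact s0 tau eta x - freact s0 tau eta y <= s0 * tau * exp (tau * B) * (x - y).
Proof.
  intros Hs Ht He HB Hy Hxy. unfold freact.
  assert (H1 : exp (- tau * y) * (1 - tau * (x - y)) <= exp (- tau * x)).
  { replace (- tau * x) with (- tau * y + (- tau * (x - y))) by ring. rewrite exp_plus.
    apply Rmult_le_compat_l; [left; apply exp_pos|]. pose proof (exp_ineq1_le (- tau * (x - y))). lra. }
  assert (H2 : exp (- tau * y) <= exp (tau * B)).
  { destruct (Req_dec (- tau * y) (tau * B)) as [->|Hn]; [lra|]. left; apply exp_increasing. nra. }
  assert (0 <= tau * (x - y)) by nra.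
  assert (exp (- tau * y) * (tau * (x - y)) <= exp (tau * B) * (tau * (x - y))) by (apply Rmult_le_compat_r; lra).
  nra.
Qed.

Lemma f_le_lin s0 tau eta v : 0 < s0 -> 0 < tau -> 0 <= v ->
  freact s0 tau eta v <= (s0 * tau - eta) * v.
Proof.
  intros. unfold freact. pose proof (exp_ineq1_le (- tau * v)). nra.
Qed.

Lemma f_ge_neg s0 tau eta v : 0 < s0 -> 0 < tau -> 0 <= v ->
  - eta * v <= freact s0 tau eta v.
Proof.
  intros. unfold freact.
  assert (exp (- tau * v) <= 1).
  { destruct (Req_dec v 0) as [->|]. rewrite Rmult_0_r, exp_0; lra.
    rewrite <- exp_0. left; apply exp_increasing. nra. }
  nra.
Qed.

Lemma exp_neg_quad x : 0 <= x -> exp (- x) <= 1 - x + x * x.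
Proof.
  intros Hx.
  assert (H1 : (1 + x / 2) * (1 + x / 2) <= exp x).
  { replace x with (x / 2 + x / 2) at 3 by field. rewrite exp_plus.
    pose proof (exp_ineq1_le (x / 2)). apply Rmult_le_compat; lra. }
  rewrite exp_Ropp.
  assert (Hp : 0 < (1 + x / 2) * (1 + x / 2)) by nra.
  apply (Rmult_le_reg_l (exp x)); [apply exp_pos|].
  rewrite Rinv_r by (apply Rgt_not_eq, exp_pos).
  assert (1 <= (1 + x / 2) * (1 + x / 2) * (1 - x + x * x)).
  { assert (0 <= x * x * x) by (repeat apply Rmult_le_pos; lra). nra. }
  assert (0 <= 1 - x + x * x) by nra.
  nra.
Qed.

Lemma f_ge_quad s0 tau eta v : 0 < s0 -> 0 < tau -> 0 <= v ->
  (s0 * tau - eta) * v - s0 * (tau * tau) * (v * v) <= freact s0 tau eta v.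
Proof.
  intros. unfold freact. pose proof (exp_neg_quad (tau * v) ltac:(nra)).
  replace (- tau * v) with (- (tau * v)) by ring. nra.
Qed.

Lemma f_gap s0 tau eta th v dl : 0 < s0 -> 0 < tau -> 0 <= th <= 1 -> 0 <= dl <= v ->
  s0 * Rmin th (1 - th) * ((1 - exp (- tau * dl / 2)) * (1 - exp (- tau * dl / 2)))
  <= freact s0 tau eta (th * v) - th * freact s0 tau eta v.
Proof.
  intros Hs Ht Hth Hdl. unfold freact.
  set (q := exp (- tau * v / 2)).
  assert (Hq2 : exp (- tau * v) = q * q).
  { unfold q. rewrite <- exp_plus. f_equal. field. }
  assert (Hq0 : 0 < q) by apply exp_pos.
  assert (Hqd : q <= exp (- tau * dl / 2)).
  { unfold q. destruct (Req_dec v dl) as [->|]; [lra|]. left; apply exp_increasing.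
    assert (dl < v) by lra. unfold Rdiv. nra. }
  assert (Hd1 : exp (- tau * dl / 2) <= 1).
  { rewrite <- exp_0. destruct (Req_dec dl 0) as [->|]. right; f_equal; field.
    left; apply exp_increasing. assert (0 < dl) by lra. unfold Rdiv. nra. }
  assert (Hm : (1 - exp (- tau * dl / 2)) * (1 - exp (- tau * dl / 2)) <= (1 - q) * (1 - q)) by nra.
  assert (Hh : Rmin th (1 - th) * ((1 - q) * (1 - q)) <= (1 - th) + th * exp (- tau * v) - exp (- tau * (th * v))).
  { rewrite Hq2. destruct (Rle_or_lt th (1/2)) as [Hle|Hgt].
    - rewrite Rmin_left by lra.
      assert (He := exp_convex (2 * th) (- tau * v / 2) 0 ltac:(lra)).
      replace (2 * th * (- tau * v / 2) + (1 - 2 * th) * 0) with (- tau * (th * v)) in He by field.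
      rewrite exp_0 in He. fold q in He. nra.
    - rewrite Rmin_right by lra.
      assert (He := exp_convex (2 * th - 1) (- tau * v) (- tau * v / 2) ltac:(lra)).
      replace ((2 * th - 1) * (- tau * v) + (1 - (2 * th - 1)) * (- tau * v / 2)) with (- tau * (th * v)) in He by field.
      fold q in He. rewrite Hq2 in He. nra. }
  assert (0 <= Rmin th (1 - th)) by (apply Rmin_glb; lra).
  assert (Rmin th (1 - th) * ((1 - exp (- tau * dl / 2)) * (1 - exp (- tau * dl / 2))) <= Rmin th (1 - th) * ((1 - q) * (1 - q)))
    by (apply Rmult_le_compat_l; auto).
  nra.
Qed.

Lemma cp_hyp k s0 i0 tau eta lam B (x y : nat -> R) n du dv :
  0 < s0 -> 0 < tau -> 0 < eta -> 0 < lam -> 0 <= B -> (1 <= n)%nat ->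
  -B <= y n -> y n < x n ->
  du <= Fop k s0 i0 tau eta lam x n -> Fop k s0 i0 tau eta lam y n <= dv ->
  ((n = 1)%nat -> du - dv <= s0 * tau * exp (tau * B) * (x 1%nat - y 1%nat)
                       + lam * (INR k + 1) * (x 2%nat - y 2%nat)) /\
  ((2 <= n)%nat -> du - dv <= s0 * tau * exp (tau * B) * (x n - y n)
                       + lam * (x (n - 1)%nat - y (n - 1)%nat) + lam * INR k * (x (S n) - y (S n))).
Proof.
  intros Hs Ht He Hl HB Hn Hy Hxy Hdu Hdv.
  pose proof (f_lip s0 tau eta B (x n) (y n) Hs Ht He HB Hy Hxy) as Hf.
  pose proof (pos_INR k).
  split.
  - intros ->. rewrite Fop_1 in Hdu, Hdv.
    assert (0 <= lam * (INR k + 1) * (x 1%nat - y 1%nat)) by (apply Rmult_le_pos; nra).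
    lra.
  - intros H2. rewrite Fop_ge2 in Hdu, Hdv by auto.
    assert (0 <= lam * (INR k + 1) * (x n - y n)) by (apply Rmult_le_pos; nra).
    lra.
Qed.

Definition Hsol (k : nat) (s0 i0 tau eta lam : R) (I : nat -> R -> R) : Prop :=
  (forall T, exists M, forall n t, (1 <= n)%nat -> 0 <= t <= T -> Rabs (I n t) <= M) /\
  (forall n, (1 <= n)%nat -> I n 0 = 0) /\
  (forall n, (1 <= n)%nat -> forall eps, 0 < eps ->
     exists d, 0 < d /\ forall t, 0 <= t < d -> Rabs (I n t - I n 0) < eps) /\
  (forall n t, (1 <= n)%nat -> 0 < t ->
     derivable_pt_lim (I n) t (Fop k s0 i0 tau eta lam (fun m => I m t) n)).

Definition Hpar (k : nat) (s0 i0 tau eta lam : R) : Prop :=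
  (1 <= k)%nat /\ 0 < s0 /\ 0 < i0 /\ 0 < tau /\ 0 < eta /\ 0 < lam.

Lemma Rabs_def2b a b : Rabs a <= b -> - b <= a <= b.
Proof.
  intros H. pose proof (RRle_abs a). pose proof (RRle_abs (- a)). rewrite Rabs_Ropp in *. lra.
Qed.

Lemma contw_of (g : R -> R) T :
  (forall eps, 0 < eps -> exists d, 0 < d /\ forall t, 0 <= t < d -> Rabs (g t - g 0) < eps) ->
  (forall t, 0 < t -> continuity_pt g t) -> contw g T.
Proof.
  intros H0 Hc t Ht eps He.
  destruct (Rle_lt_or_eq_dec 0 t (proj1 Ht)) as [Hp| <-].
  - destruct (cont_pt_eps g t (Hc t Hp) eps He) as [d [Hd H]]. exists d; split; auto.
  - destruct (H0 eps He) as [d [Hd H]]. exists d; split; auto.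
    intros s Hs Hsd. apply H. rewrite Rminus_0_r in Hsd. rewrite Rabs_right in Hsd by lra. lra.
Qed.

Lemma contw_sub (g1 g2 : R -> R) T : contw g1 T -> contw g2 T -> contw (fun t => g1 t - g2 t) T.
Proof.
  intros H1 H2 t Ht eps He.
  destruct (H1 t Ht (eps/2)) as [d1 [Hd1 A1]]; [lra|].
  destruct (H2 t Ht (eps/2)) as [d2 [Hd2 A2]]; [lra|].
  exists (Rmin d1 d2); split; [apply Rmin_pos; auto|].
  intros s Hs Hst.
  specialize (A1 s Hs (Rlt_le_trans _ _ _ Hst (Rmin_l _ _))).
  specialize (A2 s Hs (Rlt_le_trans _ _ _ Hst (Rmin_r _ _))).
  replace (g1 s - g2 s - (g1 t - g2 t)) with ((g1 s - g1 t) - (g2 s - g2 t)) by ring.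
  replace eps with (eps/2 + eps/2) by field. apply abs_sub_lt; auto.
Qed.

Lemma contw_const c T : contw (fun _ => c) T.
Proof. intros t Ht eps He. exists 1; split; [lra|]. intros. rewrite Rminus_diag, Rabs_R0; auto. Qed.

Lemma sol_contw k s0 i0 tau eta lam I : Hsol k s0 i0 tau eta lam I ->
  forall n T, (1 <= n)%nat -> contw (I n) T.
Proof.
  intros [HB [H0 [Hr Hd]]] n T Hn. apply contw_of.
  - apply Hr; auto.
  - intros t Ht. apply derivable_continuous_pt. exists (Fop k s0 i0 tau eta lam (fun m => I m t) n).
    apply Hd; auto.
Qed.

Lemma freact_0 s0 tau eta : freact s0 tau eta 0 = 0.
Proof. unfold freact. rewrite Rmult_0_r, exp_0. ring. Qed.

Lemma bound_pos (I : nat -> R -> R) T :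
  (exists M, forall n t, (1 <= n)%nat -> 0 <= t <= T -> Rabs (I n t) <= M) ->
  exists M, 0 <= M /\ forall n t, (1 <= n)%nat -> 0 <= t <= T -> Rabs (I n t) <= M.
Proof.
  intros [M HM]. exists (Rmax 0 M). split. apply Rmax_l.
  intros. eapply Rle_trans; [apply HM; auto|apply Rmax_r].
Qed.

Lemma sol_nonneg k s0 i0 tau eta lam I : Hpar k s0 i0 tau eta lam -> Hsol k s0 i0 tau eta lam I ->
  forall n t, (1 <= n)%nat -> 0 <= t -> 0 <= I n t.
Proof.
  intros Hp Hs. pose proof Hs as [HB [H0 [Hr Hd]]].
  destruct Hp as [Hk [Hs0 [Hi0 [Htau [Heta Hlam]]]]].
  intros n t Hn Ht.
  destruct (bound_pos I t (HB t)) as [M [HM0 HM]].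
  pose proof (pos_INR k).
  apply (CP (s0 * tau * exp (tau * M)) lam (lam * INR k) (lam * (INR k + 1)) t M
            (fun _ _ => 0) I); auto.
  - left; apply Rmult_lt_0_compat; [nra|apply exp_pos].
  - lra.
  - nra.
  - nra.
  - intros m s Hm Hs'. specialize (HM m s Hm Hs'). apply Rabs_def2b in HM. lra.
  - intros m Hm. rewrite H0; auto. lra.
  - intros m Hm. apply contw_sub. apply contw_const. apply (sol_contw _ _ _ _ _ _ _ Hs); auto.
  - intros m s Hm Hs' Hlt.
    exists 0, (Fop k s0 i0 tau eta lam (fun j => I j s) m).
    split; [apply derivable_pt_lim_const|]. split; [apply Hd; [lia|lra]|].
    assert (HMs := HM m s Hm ltac:(lra)). apply Rabs_def2b in HMs.
    destruct (cp_hyp k s0 i0 tau eta lam M (fun _ => 0) (fun j => I j s) m 0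
                (Fop k s0 i0 tau eta lam (fun j => I j s) m) Hs0 Htau Heta Hlam HM0 Hm)
      as [C1 C2]; simpl; try lra.
    + destruct (Nat.eq_dec m 1) as [->|Hne].
      * rewrite Fop_1, freact_0. lra.
      * rewrite Fop_ge2 by lia. rewrite freact_0. lra.
    + split; auto.
    + lra.
Qed.

Definition Hstat (k : nat) (s0 i0 tau eta lam : R) (J : nat -> R) : Prop :=
  (forall n, (1 <= n)%nat -> 0 < J n) /\
  (forall n, (1 <= n)%nat -> Fop k s0 i0 tau eta lam J n = 0).

Lemma sol_le_stat k s0 i0 tau eta lam I J : Hpar k s0 i0 tau eta lam -> Hsol k s0 i0 tau eta lam I ->
  Hstat k s0 i0 tau eta lam J ->
  forall n t, (1 <= n)%nat -> 0 <= t -> I n t <= J n.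
Proof.
  intros Hp Hs [HJ0 HJ]. pose proof Hs as [HB [H0 [Hr Hd]]].
  destruct Hp as [Hk [Hs0 [Hi0 [Htau [Heta Hlam]]]]].
  intros n t Hn Ht.
  destruct (bound_pos I t (HB t)) as [M [HM0 HM]].
  pose proof (pos_INR k).
  apply (CP (s0 * tau * exp (tau * 0)) lam (lam * INR k) (lam * (INR k + 1)) t M
            I (fun m _ => J m)); auto.
  - left; apply Rmult_lt_0_compat; [nra|apply exp_pos].
  - lra.
  - nra.
  - nra.
  - intros m s Hm Hs'. specialize (HM m s Hm Hs'). apply Rabs_def2b in HM. specialize (HJ0 m Hm). lra.
  - intros m Hm. rewrite H0; auto. left; auto.
  - intros m Hm. apply contw_sub. apply (sol_contw _ _ _ _ _ _ _ Hs); auto. apply contw_const.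
  - intros m s Hm Hs' Hlt.
    exists (Fop k s0 i0 tau eta lam (fun j => I j s) m), 0.
    split; [apply Hd; [lia|lra]|]. split; [apply derivable_pt_lim_const|].
    destruct (cp_hyp k s0 i0 tau eta lam 0 (fun j => I j s) J m
                (Fop k s0 i0 tau eta lam (fun j => I j s) m) 0 Hs0 Htau Heta Hlam ltac:(lra) Hm)
      as [C1 C2]; simpl; try lra.
    all: try (specialize (HJ0 m Hm); lra).
    all: try (rewrite HJ; auto; lra).
    split; auto.
    lra.
Qed.

Lemma sol_mono k s0 i0 tau eta lam I : Hpar k s0 i0 tau eta lam -> Hsol k s0 i0 tau eta lam I ->
  forall n t h, (1 <= n)%nat -> 0 <= t -> 0 <= h -> I n t <= I n (t + h).
Proof.
  intros Hp Hs. pose proof Hs as [HB [H0 [Hr Hd]]].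
  pose proof Hp as [Hk [Hs0 [Hi0 [Htau [Heta Hlam]]]]].
  intros n t h Hn Ht Hh.
  destruct (Rle_lt_or_eq_dec 0 h Hh) as [Hhp| <-]; [|rewrite Rplus_0_r; lra].
  destruct (bound_pos I (t + h) (HB (t + h))) as [M [HM0 HM]].
  pose proof (pos_INR k).
  apply (CP (s0 * tau * exp (tau * M)) lam (lam * INR k) (lam * (INR k + 1)) t (M + M)
            I (fun m s => I m (s + h))); auto.
  - left; apply Rmult_lt_0_compat; [nra|apply exp_pos].
  - lra.
  - nra.
  - nra.
  - intros m s Hm Hs'. assert (A1 := HM m s Hm ltac:(lra)). assert (A2 := HM m (s + h) Hm ltac:(lra)).
    apply Rabs_def2b in A1. apply Rabs_def2b in A2. lra.
  - intros m Hm. rewrite H0 by auto. rewrite Rplus_0_l. apply (sol_nonneg k s0 i0 tau eta lam); auto; lra.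
  - intros m Hm. apply contw_sub. apply (sol_contw _ _ _ _ _ _ _ Hs); auto.
    apply contw_of.
    + intros eps He. destruct (cont_pt_eps (I m) h) with (eps := eps) as [d [Hd0 Hdd]]; auto.
      { apply derivable_continuous_pt. eexists. apply Hd; auto. }
      exists d; split; auto. intros s Hs1. rewrite Rplus_0_l. apply Hdd.
      replace (s + h - h) with s by ring. rewrite Rabs_right; lra.
    + intros s Hs1. apply derivable_continuous_pt.
      exists (Fop k s0 i0 tau eta lam (fun j => I j (s + h)) m * 1).
      apply (derivable_pt_lim_comp (fun s => s + h) (I m)).
      * replace 1 with (1 + 0) by ring. apply derivable_pt_lim_plus; [apply derivable_pt_lim_id|apply derivable_pt_lim_const].
      * apply Hd; [auto|lra].
  - intros m s Hm Hs' Hlt.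
    exists (Fop k s0 i0 tau eta lam (fun j => I j s) m), (Fop k s0 i0 tau eta lam (fun j => I j (s + h)) m * 1).
    split; [apply Hd; [lia|lra]|]. split.
    { apply (derivable_pt_lim_comp (fun s => s + h) (I m)).
      * replace 1 with (1 + 0) by ring. apply derivable_pt_lim_plus; [apply derivable_pt_lim_id|apply derivable_pt_lim_const].
      * apply Hd; [auto|lra]. }
    assert (A2 := HM m (s + h) Hm ltac:(lra)). apply Rabs_def2b in A2.
    destruct (cp_hyp k s0 i0 tau eta lam M (fun j => I j s) (fun j => I j (s + h)) m
                (Fop k s0 i0 tau eta lam (fun j => I j s) m) (Fop k s0 i0 tau eta lam (fun j => I j (s + h)) m * 1)
                Hs0 Htau Heta Hlam HM0 Hm)
      as [C1 C2]; simpl; try lra.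
    split; auto.
    lra.
Qed.

Lemma pos_from_deriv (g : R -> R) (F : R -> R) q :
  (forall t, 0 < t -> derivable_pt_lim g t (F t)) ->
  (forall t, 0 < t -> 0 <= g t) ->
  (forall t, 0 < t -> 0 < F t + q * g t) ->
  forall t, 0 < t -> 0 < g t.
Proof.
  intros Hd Hnn Hpos t Ht.
  set (h := fun s => exp (q * s) * g s).
  set (dh := fun s => q * exp (q * s) * g s + exp (q * s) * F s).
  assert (Hder : forall s, 0 < s -> derivable_pt_lim h s (dh s)).
  { intros s Hs. unfold h, dh.
    replace (q * exp (q * s) * g s + exp (q * s) * F s) with ((q * exp (q * s)) * g s + exp (q * s) * F s) by ring.
    apply (derivable_pt_lim_mult (fun s => exp (q * s)) g); [|apply Hd; auto].
    apply is_derive_Reals. auto_derive; auto. ring. }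
  destruct (MVT_gen h (t/2) t dh) as [c [Hc Heq]].
  - intros x Hx. apply is_derive_Reals. apply Hder.
    pose proof (Rmin_l (t/2) t). pose proof (Rmin_r (t/2) t).
    rewrite Rmin_left in Hx by lra. lra.
  - intros x Hx. apply derivable_continuous_pt. exists (dh x). apply Hder.
    rewrite Rmin_left in Hx by lra. lra.
  - rewrite Rmin_left in Hc by lra. rewrite Rmax_right in Hc by lra.
    assert (Hc0 : 0 < c) by lra.
    assert (0 < dh c).
    { unfold dh. specialize (Hpos c Hc0). pose proof (exp_pos (q * c)).
      replace (q * exp (q * c) * g c + exp (q * c) * F c) with (exp (q * c) * (F c + q * g c)) by ring.
      apply Rmult_lt_0_compat; auto. }
    assert (0 <= h (t/2)).
    { unfold h. apply Rmult_le_pos; [left; apply exp_pos|apply Hnn; lra]. }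
    assert (0 < h t) by nra.
    unfold h in H1. pose proof (exp_pos (q * t)).
    destruct (Rle_or_lt (g t) 0); auto. nra.
Qed.

Lemma sol_pos k s0 i0 tau eta lam I : Hpar k s0 i0 tau eta lam -> Hsol k s0 i0 tau eta lam I ->
  forall n t, (1 <= n)%nat -> 0 < t -> 0 < I n t.
Proof.
  intros Hp Hs. pose proof Hs as [HB [H0 [Hr Hd]]].
  pose proof Hp as [Hk [Hs0 [Hi0 [Htau [Heta Hlam]]]]].
  pose proof (pos_INR k).
  assert (Hnn := sol_nonneg k s0 i0 tau eta lam I Hp Hs).
  set (q := eta + lam * (INR k + 1)).
  assert (Main : forall n, forall t, 0 < t -> 0 < I (S n) t).
  { induction n as [|n IH].
    - apply (pos_from_deriv (I 1%nat) (fun t => Fop k s0 i0 tau eta lam (fun m => I m t) 1) q).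
      + intros; apply Hd; auto.
      + intros; apply Hnn; auto; lra.
      + intros t Ht. rewrite Fop_1. unfold q.
        assert (A1 := Hnn 1%nat t ltac:(lia) ltac:(lra)).
        assert (A2 := Hnn 2%nat t ltac:(lia) ltac:(lra)).
        pose proof (f_ge_neg s0 tau eta (I 1%nat t) Hs0 Htau A1).
        assert (0 <= lam * (INR k + 1) * I 2%nat t) by (apply Rmult_le_pos; nra).
        nra.
    - apply (pos_from_deriv (I (S (S n))) (fun t => Fop k s0 i0 tau eta lam (fun m => I m t) (S (S n))) q).
      + intros; apply Hd; auto; lia.
      + intros; apply Hnn; [lia|lra].
      + intros t Ht. rewrite Fop_ge2 by lia. unfold q.
        assert (A1 := Hnn (S (S n)) t ltac:(lia) ltac:(lra)).
        assert (A2 := Hnn (S (S (S n))) t ltac:(lia) ltac:(lra)).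
        assert (A3 := IH t Ht). replace (S (S n) - 1)%nat with (S n) by lia.
        pose proof (f_ge_neg s0 tau eta (I (S (S n)) t) Hs0 Htau A1).
        assert (0 <= lam * (INR k * I (S (S (S n))) t)) by (apply Rmult_le_pos; [lra|apply Rmult_le_pos; lra]).
        assert (0 < lam * I (S n) t) by (apply Rmult_lt_0_compat; lra).
        nra. }
  intros n t Hn Ht. destruct n as [|n]; [lia|]. apply Main; auto.
Qed.

Lemma fin_min (g : nat -> R) : forall N, (forall n, (1 <= n <= N)%nat -> 0 < g n) ->
  exists d, 0 < d /\ forall n, (1 <= n <= N)%nat -> d <= g n.
Proof.
  induction N as [|N IH]; intros H.
  - exists 1; split; [lra|]; intros; lia.
  - destruct IH as [d [Hd Hd2]]; [intros; apply H; lia|].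
    exists (Rmin d (g (S N))); split.
    + apply Rmin_pos; auto. apply H; lia.
    + intros n Hn. destruct (Nat.eq_dec n (S N)) as [->|Hne]; [apply Rmin_r|].
      eapply Rle_trans; [apply Rmin_l|apply Hd2; lia].
Qed.

Lemma exp_le_mono x y : x <= y -> exp x <= exp y.
Proof. intros H. destruct (Req_dec x y) as [->|]; [lra|]. left; apply exp_increasing; lra. Qed.

Lemma speed_eq k s0 tau eta lam g : 0 < eta ->
  speed_fun k s0 tau eta lam g = ((s0 * tau - eta) + lam * (exp g - (INR k + 1) + INR k * exp (- g))) / g.
Proof. intros. unfold speed_fun, repro. f_equal. field. lra. Qed.

Lemma super_exp k s0 i0 tau eta lam I g c' : Hpar k s0 i0 tau eta lam -> Hsol k s0 i0 tau eta lam I ->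
  0 < g -> 0 < c' -> speed_fun k s0 tau eta lam g <= c' ->
  exists A, 0 < A /\ forall n t, (1 <= n)%nat -> 0 <= t -> I n t <= A * exp (g * (c' * t - INR n)).
Proof.
  intros Hp Hs Hg Hc Hsp. pose proof Hs as [HB [H0 [Hr Hd]]].
  pose proof Hp as [Hk [Hs0 [Hi0 [Htau [Heta Hlam]]]]].
  pose proof (pos_INR k).
  rewrite speed_eq in Hsp by auto.
  apply Rle_div_l in Hsp; auto.
  set (a := s0 * tau - eta) in *.
  set (E := exp g - (INR k + 1) + INR k * exp (- g)) in *.
  assert (Heg : exp (- g) < 1) by (rewrite <- exp_0; apply exp_increasing; lra).
  assert (Hge : 1 < exp g) by (rewrite <- exp_0; apply exp_increasing; lra).
  assert (Hdiff : 0 < lam * (exp g - exp (- g))) by (apply Rmult_lt_0_compat; lra).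
  set (A := i0 * exp g / (lam * (exp g - exp (- g))) + 1).
  assert (HA : 0 < A).
  { unfold A. assert (0 < i0 * exp g / (lam * (exp g - exp (- g)))).
    { apply Rdiv_lt_0_compat; auto. apply Rmult_lt_0_compat; auto; apply exp_pos. } lra. }
  exists A; split; auto.
  set (V := fun (n : nat) (t : R) => A * exp (g * (c' * t - INR n))).
  assert (HVpos : forall n t, 0 < V n t) by (intros; unfold V; apply Rmult_lt_0_compat; auto; apply exp_pos).
  assert (HVshift : forall n t, V (S n) t = V n t * exp (- g)).
  { intros. unfold V; cbv beta. rewrite S_INR. rewrite Rmult_assoc, <- exp_plus. f_equal. f_equal. ring. }
  assert (HVder : forall n t, derivable_pt_lim (V n) t (g * c' * V n t)).
  { intros. unfold V. apply is_derive_Reals. auto_derive; auto. unfold Rminus. ring. }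
  assert (HVsuper : forall n t, (1 <= n)%nat -> 0 <= t -> Fop k s0 i0 tau eta lam (fun m => V m t) n <= g * c' * V n t).
  { intros n t Hn Ht.
    assert (Hf := f_le_lin s0 tau eta (V n t) Hs0 Htau (Rlt_le _ _ (HVpos n t))). fold a in Hf.
    assert (HgcV : (a + lam * E) * V n t <= g * c' * V n t).
    { apply Rmult_le_compat_r; [left; auto|]. lra. }
    destruct (Nat.eq_dec n 1) as [->|Hne].
    - rewrite Fop_1. rewrite (HVshift 1%nat). simpl INR in *.
      assert (HV1 : A * exp (- g) <= V 1%nat t).
      { unfold V; cbv beta. apply Rmult_le_compat_l; [lra|]. apply exp_le_mono.
        assert (0 <= g * (c' * t)) by (apply Rmult_le_pos; nra). simpl INR. lra. }
      assert (Hi : i0 <= lam * (exp g - exp (- g)) * V 1%nat t).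
      { assert (lam * (exp g - exp (- g)) * (A * exp (- g)) <= lam * (exp g - exp (- g)) * V 1%nat t)
          by (apply Rmult_le_compat_l; lra).
        assert (Hm : lam * (exp g - exp (- g)) * (A * exp (- g)) >= i0).
        { assert (Hee : exp g * exp (- g) = 1) by (rewrite <- exp_plus, Rplus_opp_r, exp_0; auto).
          replace (lam * (exp g - exp (- g)) * (A * exp (- g))) with
            (i0 * (exp g * exp (- g)) + lam * (exp g - exp (- g)) * 1 * exp (- g))
            by (unfold A; field; lra).
          rewrite Hee.
          assert (0 < lam * (exp g - exp (- g)) * 1 * exp (- g)).
          { apply Rmult_lt_0_compat; [lra|apply exp_pos]. } lra. }
        lra. }
      unfold E in HgcV. set (v1 := V 1%nat t) in *. set (em := exp (- g)) in *.
      nra.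
    - rewrite Fop_ge2 by lia.
      assert (Hprev : V (n - 1)%nat t = V n t * exp g).
      { unfold V; cbv beta. rewrite minus_INR by lia. simpl INR. rewrite Rmult_assoc, <- exp_plus. f_equal. f_equal. ring. }
      rewrite Hprev, HVshift. unfold E in HgcV. set (vn := V n t) in *. nra. }
  intros n t Hn Ht.
  destruct (bound_pos I t (HB t)) as [M [HM0 HM]].
  apply (CP (s0 * tau * exp (tau * 0)) lam (lam * INR k) (lam * (INR k + 1)) t M I V); auto.
  - left; apply Rmult_lt_0_compat; [nra|apply exp_pos].
  - lra.
  - nra.
  - nra.
  - intros m s Hm Hs'. specialize (HM m s Hm Hs'). apply Rabs_def2b in HM. specialize (HVpos m s). lra.
  - intros m Hm. rewrite H0; auto. left; auto.
  - intros m Hm. apply contw_sub. apply (sol_contw _ _ _ _ _ _ _ Hs); auto.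
    apply contw_of.
    + intros eps He. destruct (cont_pt_eps (V m) 0) with (eps := eps) as [d [Hd0 Hdd]]; auto.
      { apply derivable_continuous_pt. eexists. apply HVder. }
      exists d; split; auto. intros s Hs1. apply Hdd. rewrite Rminus_0_r, Rabs_right; lra.
    + intros s Hs1. apply derivable_continuous_pt. eexists. apply HVder.
  - intros m s Hm Hs' Hlt.
    exists (Fop k s0 i0 tau eta lam (fun j => I j s) m), (g * c' * V m s).
    split; [apply Hd; [lia|lra]|]. split; [apply HVder|].
    destruct (cp_hyp k s0 i0 tau eta lam 0 (fun j => I j s) (fun j => V j s) m
                (Fop k s0 i0 tau eta lam (fun j => I j s) m) (g * c' * V m s) Hs0 Htau Heta Hlam ltac:(lra) Hm)
      as [C1 C2]; simpl; try lra.
    all: try (specialize (HVpos m s); lra).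
    all: try (apply HVsuper; auto; lra).
    split; auto.
  - lra.
Qed.

Lemma amgm_exp k g : (1 <= k)%nat -> 2 * sqrt (INR k) <= exp g + INR k * exp (- g).
Proof.
  intros Hk. assert (Hk0 : 0 <= INR k) by apply pos_INR.
  set (p := exp (g / 2)). set (m := exp (- g / 2)).
  assert (Hp : p * p = exp g) by (unfold p; rewrite <- exp_plus; f_equal; field).
  assert (Hm : m * m = exp (- g)) by (unfold m; rewrite <- exp_plus; f_equal; field).
  assert (Hpm : p * m = 1) by (unfold p, m; rewrite <- exp_plus; replace (g / 2 + - g / 2) with 0 by field; apply exp_0).
  assert (Hs : sqrt (INR k) * sqrt (INR k) = INR k) by (apply sqrt_sqrt; auto).
  set (s := sqrt (INR k)) in *.
  assert (H0 : 0 <= (p - s * m) * (p - s * m)) by apply Rle_0_sqr.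
  assert (E1 : (p - s * m) * (p - s * m) = p * p - 2 * s * (p * m) + (s * s) * (m * m)) by ring.
  rewrite Hp, Hm, Hpm, Hs in E1. lra.
Qed.

Lemma speed_pos k s0 tau eta lam g : (2 <= k)%nat -> 0 < eta -> 0 < lam ->
  repro s0 tau eta > 1 -> lam < lambda_c k s0 tau eta -> 0 < g ->
  0 < speed_fun k s0 tau eta lam g.
Proof.
  intros Hk He Hl Hr Hlc Hg.
  unfold speed_fun. apply Rdiv_lt_0_compat; auto.
  unfold lambda_c in Hlc.
  assert (Hk1 : 1 < sqrt (INR k)).
  { assert (2 <= INR k) by (apply (le_INR 2); lia).
    rewrite <- sqrt_1. apply sqrt_lt_1; lra. }
  assert (Hs : sqrt (INR k) * sqrt (INR k) = INR k) by (apply sqrt_sqrt; apply pos_INR).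
  assert (Hden : 0 < INR k + 1 - 2 * sqrt (INR k)) by nra.
  apply Rlt_div_r in Hlc; [|lra].
  pose proof (amgm_exp k g ltac:(lia)).
  nra.
Qed.

Lemma cstar_props k s0 tau eta lam : (2 <= k)%nat -> 0 < eta -> 0 < lam ->
  repro s0 tau eta > 1 -> lam < lambda_c k s0 tau eta ->
  0 <= c_star k s0 tau eta lam /\
  (forall c, c_star k s0 tau eta lam < c -> exists g, 0 < g /\ speed_fun k s0 tau eta lam g < c) /\
  (forall c g, c < c_star k s0 tau eta lam -> 0 < g -> c < speed_fun k s0 tau eta lam g).
Proof.
  intros Hk He Hl Hr Hlc.
  set (S := fun y => exists g, 0 < g /\ y = speed_fun k s0 tau eta lam g).
  assert (Hlb0 : is_lb_Rbar S 0).
  { intros y [g [Hg ->]]. simpl. left. apply speed_pos; auto. }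
  pose proof (Glb_Rbar_correct S) as [Hlb Hgr].
  unfold c_star. fold S.
  destruct (Glb_Rbar S) as [r| |] eqn:Eg.
  - simpl. split; [|split].
    + specialize (Hgr 0 Hlb0). simpl in Hgr. auto.
    + intros c Hc. apply NNPP. intros Hn.
      assert (is_lb_Rbar S c).
      { intros y [g [Hg ->]]. simpl. apply Rnot_lt_le. intros Hlt. apply Hn. exists g; auto. }
      specialize (Hgr c H). simpl in Hgr. lra.
    + intros c g Hc Hg. assert (S (speed_fun k s0 tau eta lam g)) by (exists g; auto).
      specialize (Hlb _ H). simpl in Hlb. lra.
  - exfalso. assert (S (speed_fun k s0 tau eta lam 1)) by (exists 1; split; [lra|auto]).
    specialize (Hlb _ H). simpl in Hlb. auto.
  - exfalso. specialize (Hgr 0 Hlb0). simpl in Hgr. auto.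
Qed.

Lemma part2 k s0 i0 tau eta lam I : Hpar k s0 i0 tau eta lam -> Hsol k s0 i0 tau eta lam I ->
  (2 <= k)%nat -> repro s0 tau eta > 1 -> lam < lambda_c k s0 tau eta ->
  forall c, c > c_star k s0 tau eta lam ->
     forall eps, 0 < eps -> exists T, forall t, T <= t ->
       forall n, (1 <= n)%nat -> c * t <= INR n -> Rabs (I n t) <= eps.
Proof.
  intros Hp Hs Hk Hr Hlc c Hc eps Heps.
  pose proof Hp as [Hk1 [Hs0 [Hi0 [Htau [Heta Hlam]]]]].
  destruct (cstar_props k s0 tau eta lam Hk Heta Hlam Hr Hlc) as [Hc0 [Hlt _]].
  set (c' := (c + c_star k s0 tau eta lam) / 2).
  destruct (Hlt c' ltac:(unfold c'; lra)) as [g [Hg Hsp]].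
  destruct (super_exp k s0 i0 tau eta lam I g c' Hp Hs Hg ltac:(unfold c'; lra) ltac:(lra)) as [A [HA HI]].
  set (q := g * (c' - c)).
  assert (Hq : q < 0) by (unfold q, c'; nra).
  exists (Rmax 0 (ln (eps / A) / q)).
  intros t Ht n Hn Hct.
  assert (Ht0 : 0 <= t) by (eapply Rle_trans; [apply Rmax_l|apply Ht]).
  assert (Hnn := sol_nonneg k s0 i0 tau eta lam I Hp Hs n t Hn Ht0).
  rewrite Rabs_right by lra.
  eapply Rle_trans; [apply HI; auto|].
  assert (H1 : g * (c' * t - INR n) <= q * t).
  { unfold q. assert (g * (c * t) <= g * INR n) by (apply Rmult_le_compat_l; lra). nra. }
  assert (H2 : q * t <= ln (eps / A)).
  { assert (ln (eps / A) / q <= t) by (eapply Rle_trans; [apply Rmax_r|apply Ht]).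
    apply (Rmult_le_compat_neg_l q) in H; [|lra].
    replace (q * (ln (eps / A) / q)) with (ln (eps / A)) in H by (field; lra). lra. }
  assert (exp (g * (c' * t - INR n)) <= eps / A).
  { rewrite <- (exp_ln (eps / A)) by (apply Rdiv_lt_0_compat; lra). apply exp_le_mono. lra. }
  apply (Rmult_le_compat_l A) in H; [|lra].
  replace (A * (eps / A)) with eps in H by (field; lra). auto.
Qed.

Lemma sin_lb3 b : 0 <= b <= 1 -> b - b * b * b / 6 <= sin b.
Proof.
  intros Hb. assert (PI2_1' := PI2_1).
  destruct (sin_bound b 0 ltac:(lra) ltac:(lra)) as [H _].
  replace (sin_approx b (2 * 0 + 1)) with (b - b * b * b / 6) in H; auto.
  unfold sin_approx, sin_term. simpl. field.
Qed.

Lemma sin_ub1 b : 0 <= b <= 1 -> sin b <= b.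
Proof.
  intros Hb. assert (PI2_1' := PI2_1).
  destruct (sin_bound b 0 ltac:(lra) ltac:(lra)) as [_ H].
  replace (sin_approx b (2 * (0 + 1))) with (b - b * b * b / 6 + b * b * b * b * b / 120) in H.
  - assert (0 <= b * b * b) by (repeat apply Rmult_le_pos; lra).
    assert (b * b * b * b * b <= b * b * b) by (assert (b * b <= 1) by nra; nra). lra.
  - unfold sin_approx, sin_term. simpl. field.
Qed.

Lemma one_minus_cos b : 0 <= b <= 1 -> 1 - cos b <= b * b / 2.
Proof.
  intros Hb. replace b with (2 * (b / 2)) at 1 by field. rewrite cos_2a_sin.
  assert (H1 := sin_ub1 (b / 2) ltac:(lra)).
  assert (PI2_1' := PI2_1).
  assert (H2 : 0 <= sin (b / 2)).
  { destruct (Req_dec b 0) as [->|]. replace (0/2) with 0 by field. rewrite sin_0; lra.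
    left; apply sin_gt_0; lra. }
  nra.
Qed.

Lemma ln_le_sub1 z : 0 < z -> ln z <= z - 1.
Proof. intros. pose proof (exp_ineq1_le (ln z)). rewrite exp_ln in H0; auto. lra. Qed.

Lemma hump_params k lam c1 a : (1 <= k)%nat -> 0 < lam -> 0 < c1 ->
  (forall g, 0 < g -> c1 < (a + lam * (exp g - (INR k + 1) + INR k * exp (- g))) / g) ->
  exists al be, 0 < al /\ 0 < be <= 1 /\
    c1 * be = lam * sin be * (exp al - INR k * exp (- al)) /\
    c1 * al - lam * (cos be * (exp al + INR k * exp (- al)) - (INR k + 1)) < a.
Proof.
  intros Hk Hl Hc Hsp.
  assert (Hk1 : 1 <= INR k) by (apply (le_INR 1); lia).
  set (y0 := c1 / lam).
  assert (Hy0 : 0 < y0) by (apply Rdiv_lt_0_compat; auto).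
  assert (Hly0 : lam * y0 = c1) by (unfold y0; field; lra).
  clearbody y0.
  set (Xf := fun y => (y + sqrt (y * y + 4 * INR k)) / 2).
  assert (HS : forall y, sqrt (y * y + 4 * INR k) * sqrt (y * y + 4 * INR k) = y * y + 4 * INR k)
    by (intros; apply sqrt_sqrt; nra).
  assert (HSp : forall y, 0 <= sqrt (y * y + 4 * INR k)) by (intros; apply sqrt_pos).
  assert (Hquad : forall y, Xf y * Xf y = y * Xf y + INR k).
  { intros y. unfold Xf. specialize (HS y). nra. }
  assert (HXpos : forall y, 0 <= y -> 0 < Xf y).
  { intros y Hy. unfold Xf. assert (0 < sqrt (y * y + 4 * INR k)) by (apply sqrt_lt_R0; nra). lra. }
  assert (HX1 : forall y, 0 <= y -> 1 <= Xf y).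
  { intros y Hy. specialize (Hquad y). specialize (HXpos y Hy). nra. }
  assert (HXmono : forall y, y0 <= y -> 0 <= Xf y - Xf y0 <= y - y0).
  { intros y Hy. unfold Xf.
    set (S := sqrt (y * y + 4 * INR k)). set (S0 := sqrt (y0 * y0 + 4 * INR k)).
    assert (E1 : S * S = y * y + 4 * INR k) by apply HS.
    assert (E2 : S0 * S0 = y0 * y0 + 4 * INR k) by apply HS.
    assert (0 <= S) by apply HSp. assert (0 <= S0) by apply HSp.
    assert (y <= S) by nra. assert (y0 <= S0) by nra.
    assert (S0 <= S) by nra.
    assert ((S - S0) * (S + S0) = (y - y0) * (y + y0)) by nra.
    assert (S - S0 <= y - y0) by nra.
    split; lra. }
  set (X0 := Xf y0).
  assert (HX0 : 1 <= X0) by (apply HX1; lra).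
  set (al0 := ln X0).
  assert (Hal0 : 0 <= al0) by (unfold al0; rewrite <- ln_1; apply ln_le; lra).
  assert (Heal0 : exp al0 = X0) by (unfold al0; apply exp_ln; lra).
  assert (Heal0m : exp (- al0) = / X0) by (rewrite exp_Ropp, Heal0; auto).
  assert (Hal0p : 0 < al0).
  { destruct (Req_dec al0 0) as [E0|]; [|lra].
    exfalso. rewrite E0, exp_0 in Heal0. assert (Hq := Hquad y0). fold X0 in Hq. rewrite <- Heal0 in Hq. nra. }
  set (E0 := X0 + INR k / X0).
  assert (Hs0 := Hsp al0 Hal0p).
  rewrite Heal0, Heal0m in Hs0.
  apply Rlt_div_r in Hs0; [|lra].
  set (m := a + lam * (E0 - (INR k + 1)) - c1 * al0).
  assert (Hm : 0 < m).
  { unfold m, E0. replace (INR k / X0) with (INR k * / X0) by (unfold Rdiv; auto). nra. }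
  set (Eb := X0 + y0 / 3 + INR k).
  set (Q := c1 * y0 / 3 + lam * Eb / 2).
  assert (HQ : 0 < Q) by (unfold Q, Eb; assert (0 < c1 * y0) by nra; nra).
  set (be := Rmin 1 (m / (2 * Q))).
  assert (Hbe : 0 < be <= 1).
  { unfold be. split. apply Rmin_pos; [lra|apply Rdiv_lt_0_compat; lra]. apply Rmin_l. }
  assert (Hbe2 : be * Q <= m / 2).
  { unfold be. pose proof (Rmin_r 1 (m / (2 * Q))).
    apply (Rmult_le_compat_r Q) in H; [|lra]. replace (m / (2 * Q) * Q) with (m / 2) in H by (field; lra). auto. }
  set (sb := sin be).
  assert (Hsb1 := sin_lb3 be ltac:(lra)). assert (Hsb2 := sin_ub1 be ltac:(lra)). fold sb in Hsb1, Hsb2.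
  assert (Hsbp : 0 < sb) by (assert (be * be <= 1) by nra; nra).
  set (y := y0 * be / sb).
  assert (Hyy : y0 <= y).
  { unfold y. apply Rle_div_r; [lra|]. apply Rmult_le_compat_l; lra. }
  assert (Hyy2 : y - y0 <= y0 * (be * be) / 3).
  { unfold y. assert (y0 * be / sb - y0 = y0 * (be - sb) / sb) by (field; lra).
    rewrite H. apply Rle_div_l; auto.
    assert (0 <= be - sb <= be * be * be / 6) by lra.
    assert (be * be <= 1) by nra.
    assert (y0 * (be * be) / 3 * sb >= y0 * (be * be) / 3 * (be - be * be * be / 6)) by
      (apply Rle_ge, Rmult_le_compat_l; [apply Rmult_le_pos; [nra|lra]| lra]).
    assert (A1 : y0 * (be - sb) <= y0 * (be * be * be / 6)) by (apply Rmult_le_compat_l; lra).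
    assert (A2 : y0 * (be * be) / 3 * (be - be * be * be / 6) = y0 * be * be * be / 3 - y0 * be * be * be * (be * be) / 18) by field.
    assert (A0 : 0 <= y0 * be * be * be) by (repeat apply Rmult_le_pos; lra).
    assert (A3 : y0 * be * be * be * (be * be) <= y0 * be * be * be * 1) by (apply Rmult_le_compat_l; lra).
    lra. }
  set (X := Xf y).
  assert (HXX := HXmono y Hyy). fold X X0 in HXX.
  assert (HX : 1 <= X) by (apply HX1; lra).
  set (al := ln X).
  assert (Heal : exp al = X) by (unfold al; apply exp_ln; lra).
  assert (Healm : exp (- al) = / X) by (rewrite exp_Ropp, Heal; auto).
  assert (HqX := Hquad y). fold X in HqX.
  assert (HqX0 := Hquad y0). fold X0 in HqX0.
  exists al, be. split; [|split; [auto|split]].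
  - unfold al. rewrite <- ln_1. apply ln_increasing; [lra|]. nra.
  - rewrite Heal, Healm.
    assert (X - INR k * / X = y).
    { replace (X - INR k * / X) with ((X * X - INR k) / X) by (field; lra). rewrite HqX. field; lra. }
    rewrite H. unfold y. rewrite <- Hly0. fold sb. field. lra.
  - rewrite Heal, Healm.
    assert (Hd : al - al0 <= X - X0).
    { unfold al, al0. rewrite <- ln_div by lra. pose proof (ln_le_sub1 (X / X0) ltac:(apply Rdiv_lt_0_compat; lra)).
      assert (X / X0 - 1 <= X - X0).
      { replace (X / X0 - 1) with ((X - X0) / X0) by (field; lra). apply Rle_div_l; [lra|]. nra. }
      lra. }
    set (EE := X + INR k * / X).
    assert (HE : E0 <= EE).
    { unfold EE, E0.
      assert (X + INR k * / X - (X0 + INR k / X0) = (X - X0) * (X * X0 - INR k) / (X * X0)) by (field; lra).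
      assert (0 <= (X - X0) * (X * X0 - INR k) / (X * X0)).
      { apply Rdiv_le_0_compat; [|nra]. apply Rmult_le_pos; nra. }
      lra. }
    assert (HEb : EE <= Eb).
    { unfold EE, Eb. assert (INR k * / X <= INR k).
      { rewrite <- (Rmult_1_r (INR k)) at 2. apply Rmult_le_compat_l; [lra|].
        rewrite <- Rinv_1. apply Rinv_le_contravar; lra. }
      assert (be * be <= 1) by nra.
      assert (y0 * (be * be) / 3 <= y0 / 3) by (apply Rmult_le_compat_r; [lra|]; nra). lra. }
    assert (Hcos := one_minus_cos be ltac:(lra)).
    assert (Hcb : cos be <= 1) by (pose proof (COS_bound be); lra).
    assert (HEEpos : 0 <= EE) by (unfold EE; assert (0 <= INR k * / X) by (apply Rmult_le_pos; [lra|left; apply Rinv_0_lt_compat; lra]); lra).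
    assert (Hc1 : c1 * (al - al0) <= c1 * (y0 * (be * be) / 3)) by (apply Rmult_le_compat_l; lra).
    assert (Hcos2 : (1 - cos be) * EE <= be * be / 2 * Eb) by (apply Rmult_le_compat; nra).
    assert (Hbb : be * be * Q <= be * Q) by (apply Rmult_le_compat_r; nra).
    assert (H1 : lam * ((1 - cos be) * EE) <= lam * (be * be / 2 * Eb)) by (apply Rmult_le_compat_l; lra).
    assert (H2 : lam * (E0 - EE) <= 0) by (apply Rmult_le_0_l; lra).
    assert (H3 : c1 * (y0 * (be * be) / 3) + lam * (be * be / 2 * Eb) = be * be * Q) by (unfold Q; field).
    assert (H4 : c1 * al - lam * (cos be * EE - (INR k + 1)) =
      (c1 * al0 - lam * (E0 - (INR k + 1))) + c1 * (al - al0) + lam * (E0 - EE) + lam * ((1 - cos be) * EE)) by ring.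
    assert (H5 : m = a + lam * (E0 - (INR k + 1)) - c1 * al0) by reflexivity.
    lra.
Qed.

Definition Phi (al be y : R) : R := exp (- al * y) * sin (be * y).
Definition dPhi (al be y : R) : R := exp (- al * y) * (- al * sin (be * y) + be * cos (be * y)).

Lemma Phi_deriv al be y : derivable_pt_lim (Phi al be) y (dPhi al be y).
Proof.
  apply is_derive_Reals. unfold Phi, dPhi. auto_derive; auto. ring.
Qed.

Lemma Phi_identity k lam c1 al be a' y :
  c1 * be = lam * sin be * (exp al - INR k * exp (- al)) ->
  a' = c1 * al - lam * (cos be * (exp al + INR k * exp (- al)) - (INR k + 1)) ->
  - c1 * dPhi al be y = a' * Phi al be y
     + lam * (Phi al be (y - 1) - (INR k + 1) * Phi al be y + INR k * Phi al be (y + 1)).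
Proof.
  intros H1 H2. unfold Phi, dPhi.
  replace (- al * (y - 1)) with (- al * y + al) by ring.
  replace (- al * (y + 1)) with (- al * y + - al) by ring.
  replace (be * (y - 1)) with (be * y - be) by ring.
  replace (be * (y + 1)) with (be * y + be) by ring.
  rewrite !exp_plus, sin_minus, sin_plus.
  set (ea := exp (- al * y)). set (s := sin (be * y)). set (c := cos (be * y)).
  subst a'.
  assert (E : - c1 * (ea * (- al * s + be * c)) -
   ((c1 * al - lam * (cos be * (exp al + INR k * exp (- al)) - (INR k + 1))) * (ea * s) +
    lam * (ea * exp al * (s * cos be - c * sin be) - (INR k + 1) * (ea * s) +
           INR k * (ea * exp (- al) * (s * cos be + c * sin be))))
   = ea * c * (lam * sin be * (exp al - INR k * exp (- al)) - c1 * be)) by ring.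
  rewrite <- H1 in E. lra.
Qed.

Definition clamp (b y : R) : R := Rmax 0 (Rmin y b).

Lemma clamp_lip b x y : 0 <= b -> Rabs (clamp b x - clamp b y) <= Rabs (x - y).
Proof.
  intros Hb. pose proof (RRle_abs (x - y)). pose proof (RRle_abs (y - x)).
  rewrite Rabs_minus_sym in H0.
  unfold clamp, Rmax, Rmin. repeat destruct (Rle_dec _ _); apply Rabs_le; lra.
Qed.

Lemma clamp_id b y : 0 <= y <= b -> clamp b y = y.
Proof. intros. unfold clamp. rewrite Rmin_left by lra. rewrite Rmax_right; lra. Qed.

Lemma clamp_range b y : 0 <= b -> 0 <= clamp b y <= b.
Proof. intros. unfold clamp, Rmax, Rmin. repeat destruct (Rle_dec _ _); lra. Qed.

Lemma clamp_low b y : 0 <= b -> y <= 0 -> clamp b y = 0.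
Proof. intros. unfold clamp, Rmax, Rmin. repeat destruct (Rle_dec _ _); lra. Qed.

Lemma clamp_high b y : 0 <= b -> b <= y -> clamp b y = b.
Proof. intros. unfold clamp, Rmax, Rmin. repeat destruct (Rle_dec _ _); lra. Qed.

Lemma cont_pt_of_eps (f : R -> R) x :
  (forall eps, 0 < eps -> exists d, 0 < d /\ forall y, Rabs (y - x) < d -> Rabs (f y - f x) < eps) ->
  continuity_pt f x.
Proof.
  intros H. unfold continuity_pt, continue_in, limit1_in, limit_in. intros eps He.
  destruct (H eps He) as [d [Hd Hy]]. exists d; split; auto.
  intros y [_ Hyd]. simpl in *. unfold R_dist in *. apply Hy; auto.
Qed.

Definition psi (al be y : R) : R := Phi al be (clamp (PI / be) y).

Lemma psi_cont al be y : 0 < be -> continuity_pt (psi al be) y.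
Proof.
  intros Hbe. apply cont_pt_of_eps. intros eps He.
  assert (Hb : 0 <= PI / be) by (apply Rdiv_le_0_compat; [pose proof PI_RGT_0; lra|auto]).
  assert (Hc : continuity_pt (Phi al be) (clamp (PI / be) y)).
  { apply derivable_continuous_pt. eexists. apply Phi_deriv. }
  destruct (cont_pt_eps _ _ Hc eps He) as [d [Hd Hz]].
  exists d; split; auto. intros z Hzy. unfold psi. apply Hz.
  eapply Rle_lt_trans; [apply clamp_lip; auto|auto].
Qed.

Lemma psi_bounds al be y : 0 < al -> 0 < be -> 0 <= psi al be y <= 1.
Proof.
  intros Hal Hbe. unfold psi, Phi.
  assert (Hb : 0 <= PI / be) by (apply Rdiv_le_0_compat; [pose proof PI_RGT_0; lra|auto]).
  destruct (clamp_range (PI / be) y Hb) as [H1 H2].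
  set (z := clamp (PI / be) y) in *.
  assert (Hs : 0 <= sin (be * z)).
  { apply sin_ge_0. nra. apply (Rmult_le_compat_l be) in H2; [|lra].
    replace (be * (PI / be)) with PI in H2 by (field; lra). auto. }
  assert (He : exp (- al * z) <= 1).
  { rewrite <- exp_0. apply exp_le_mono. nra. }
  pose proof (SIN_bound (be * z)). pose proof (exp_pos (- al * z)).
  split; [apply Rmult_le_pos; lra|]. nra.
Qed.

Lemma psi_ge_Phi al be z : 0 < be -> - (PI / be) < z < 2 * (PI / be) -> Phi al be z <= psi al be z.
Proof.
  intros Hbe Hz. pose proof PI_RGT_0.
  assert (Hb : 0 <= PI / be) by (apply Rdiv_le_0_compat; lra).
  assert (Hbb : be * (PI / be) = PI) by (field; lra).
  unfold psi. destruct (Rle_or_lt z 0) as [Hz0|Hz0].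
  - rewrite clamp_low by auto. unfold Phi. rewrite !Rmult_0_r, sin_0, Rmult_0_r.
    assert (sin (be * z) <= 0).
    { replace (be * z) with (- (- (be * z))) by ring. rewrite sin_neg.
      assert (0 <= sin (- (be * z))).
      { apply sin_ge_0. nra. assert (be * z > be * (- (PI / be))) by (apply Rmult_lt_compat_l; lra). nra. }
      lra. }
    pose proof (exp_pos (- al * z)). nra.
  - destruct (Rle_or_lt (PI / be) z) as [Hzb|Hzb].
    + rewrite clamp_high by auto. unfold Phi. rewrite Hbb, sin_PI, Rmult_0_r.
      assert (sin (be * z) <= 0).
      { apply sin_le_0. apply (Rmult_le_compat_l be) in Hzb; lra.
        assert (be * z < be * (2 * (PI / be))) by (apply Rmult_lt_compat_l; lra). nra. }
      pose proof (exp_pos (- al * z)). nra.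
    + rewrite clamp_id by lra. lra.
Qed.

Lemma psi_zero_out al be y : 0 < be -> (y <= 0 \/ PI / be <= y) -> psi al be y = 0.
Proof.
  intros Hbe Hy. pose proof PI_RGT_0.
  assert (Hb : 0 <= PI / be) by (apply Rdiv_le_0_compat; lra).
  unfold psi, Phi. destruct Hy as [Hy|Hy].
  - rewrite clamp_low by auto. rewrite !Rmult_0_r, sin_0; ring.
  - rewrite clamp_high by auto. replace (be * (PI / be)) with PI by (field; lra). rewrite sin_PI; ring.
Qed.

Lemma contw_cont (g : R -> R) T : (forall t, continuity_pt g t) -> contw g T.
Proof.
  intros H. apply contw_of.
  - intros eps He. destruct (cont_pt_eps g 0 (H 0) eps He) as [d [Hd Hy]].
    exists d; split; auto. intros t Ht. apply Hy. rewrite Rminus_0_r, Rabs_right; lra.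
  - intros; apply H.
Qed.

Lemma shift_deriv k s0 i0 tau eta lam I h n s : Hsol k s0 i0 tau eta lam I -> (1 <= n)%nat -> 0 < s + h ->
  derivable_pt_lim (fun s => I n (s + h)) s (Fop k s0 i0 tau eta lam (fun j => I j (s + h)) n * 1).
Proof.
  intros [_ [_ [_ Hd]]] Hn Hs.
  apply (derivable_pt_lim_comp (fun s => s + h) (I n)).
  - replace 1 with (1 + 0) by ring. apply derivable_pt_lim_plus; [apply derivable_pt_lim_id|apply derivable_pt_lim_const].
  - apply Hd; auto.
Qed.

Lemma shift_contw k s0 i0 tau eta lam I h n T : Hsol k s0 i0 tau eta lam I -> (1 <= n)%nat -> 0 < h ->
  contw (fun s => I n (s + h)) T.
Proof.
  intros Hs Hn Hh. pose proof Hs as [HB [H0 [Hr Hd]]].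
  apply contw_of.
  + intros eps He. destruct (cont_pt_eps (I n) h) with (eps := eps) as [d [Hd0 Hdd]]; auto.
    { apply derivable_continuous_pt. eexists. apply Hd; auto. }
    exists d; split; auto. intros s Hs1. rewrite Rplus_0_l. apply Hdd.
    replace (s + h - h) with s by ring. rewrite Rabs_right; lra.
  + intros s Hs1. apply derivable_continuous_pt. eexists. apply (shift_deriv k s0 i0 tau eta lam I h n s Hs Hn). lra.
Qed.

Lemma hump_sub k s0 i0 tau eta lam I c1 :
  Hpar k s0 i0 tau eta lam -> Hsol k s0 i0 tau eta lam I -> 0 < s0 * tau - eta -> 0 < c1 ->
  (forall g, 0 < g -> c1 < speed_fun k s0 tau eta lam g) ->
  exists dl, 0 < dl /\ forall t n, 1 <= t -> (1 <= n)%nat -> INR n <= c1 * t -> dl <= I n t.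
Proof.
  intros Hp Hs Ha Hc1 Hsp.
  pose proof Hs as [HB [H0 [Hr Hd]]].
  pose proof Hp as [Hk [Hs0 [Hi0 [Htau [Heta Hlam]]]]].
  pose proof (pos_INR k) as HkR.
  set (a := s0 * tau - eta) in *.
  destruct (hump_params k lam c1 a Hk Hlam Hc1) as [al [be [Hal [Hbe [Hrel Ha']]]]].
  { intros g Hg. specialize (Hsp g Hg). rewrite speed_eq in Hsp by auto. exact Hsp. }
  set (a' := c1 * al - lam * (cos be * (exp al + INR k * exp (- al)) - (INR k + 1))) in *.
  pose proof PI_RGT_0 as HPI. pose proof PI2_1 as HPI2.
  set (b := PI / be).
  assert (Hb1 : 1 < b).
  { unfold b. apply Rlt_div_r; [lra|]. lra. }
  set (x0 := 1 + c1).
  destruct (INR_archimed 1 (x0 + b) ltac:(lra)) as [N0 HN0]. rewrite Rmult_1_r in HN0.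
  destruct (fin_min (fun n => I n 1) N0) as [d0 [Hd0 Hd0b]].
  { intros n Hn. apply (sol_pos k s0 i0 tau eta lam I Hp Hs); [lia|lra]. }
  set (eps := Rmin d0 ((a - a') / (s0 * (tau * tau)))).
  assert (Heps : 0 < eps).
  { unfold eps. apply Rmin_pos; auto. apply Rdiv_lt_0_compat; [lra|]. apply Rmult_lt_0_compat; nra. }
  assert (Heps1 : eps <= d0) by apply Rmin_l.
  assert (Heps2 : s0 * (tau * tau) * eps <= a - a').
  { assert (eps <= (a - a') / (s0 * (tau * tau))) by apply Rmin_r.
    apply Rle_div_r in H; [|apply Rmult_lt_0_compat; nra]. lra. }
  set (u := fun (n : nat) (s : R) => eps * psi al be (INR n - c1 * s - x0)).
  assert (Hub : forall n s, 0 <= u n s <= eps).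
  { intros. unfold u. destruct (psi_bounds al be (INR n - c1 * s - x0) Hal ltac:(lra)). nra. }
  assert (Hucont : forall n s, continuity_pt (u n) s).
  { intros n s. unfold u. apply continuity_pt_mult; [apply continuity_pt_const; intros ? ?; auto|].
    apply (continuity_pt_comp (fun s => INR n - c1 * s - x0) (psi al be)).
    - apply derivable_continuous_pt. eexists. apply is_derive_Reals. auto_derive; auto.
    - apply psi_cont; lra. }
  assert (Hcmp : forall n s, (1 <= n)%nat -> 0 <= s -> u n s <= I n (s + 1)).
  { intros n s Hn Hs'.
    destruct (bound_pos I (s + 1) (HB (s + 1))) as [M [HM0 HM]].
    apply (CP (s0 * tau * exp (tau * 0)) lam (lam * INR k) (lam * (INR k + 1)) s eps
              u (fun m s => I m (s + 1))); auto.
    - left; apply Rmult_lt_0_compat; [nra|apply exp_pos].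
    - lra.
    - nra.
    - nra.
    - intros m s1 Hm Hs1. specialize (Hub m s1).
      pose proof (sol_nonneg k s0 i0 tau eta lam I Hp Hs m (s1 + 1) Hm ltac:(lra)). lra.
    - intros m Hm. rewrite Rplus_0_l. unfold u.
      destruct (Rle_or_lt b (INR m - c1 * 0 - x0)) as [Hout|Hin].
      + rewrite (psi_zero_out al be _ ltac:(lra) (or_intror Hout)). rewrite Rmult_0_r.
        apply (sol_nonneg k s0 i0 tau eta lam I Hp Hs); [auto|lra].
      + assert (Hm0 : (m <= N0)%nat).
        { destruct (Compare_dec.le_lt_dec m N0); auto.
          assert (INR N0 < INR m) by (apply lt_INR; auto). lra. }
        specialize (Hd0b m ltac:(lia)). simpl in Hd0b.
        destruct (psi_bounds al be (INR m - c1 * 0 - x0) Hal ltac:(lra)). nra.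
    - intros m Hm. apply contw_sub. apply contw_cont; auto.
      apply (shift_contw k s0 i0 tau eta lam I 1 m s Hs Hm); lra.
    - intros m s1 Hm Hs1 Hlt.
      set (y := INR m - c1 * s1 - x0).
      assert (Hv0 := sol_nonneg k s0 i0 tau eta lam I Hp Hs m (s1 + 1) Hm ltac:(lra)).
      assert (Hupos : 0 < u m s1) by lra.
      assert (Hy : 0 < y < b).
      { destruct (Rle_or_lt y 0) as [H1|H1].
        - exfalso. unfold u in Hupos. fold y in Hupos. rewrite (psi_zero_out al be _ ltac:(lra) (or_introl H1)) in Hupos. lra.
        - destruct (Rle_or_lt b y) as [H2|H2]; [|lra].
          exfalso. unfold u in Hupos. fold y in Hupos. rewrite (psi_zero_out al be _ ltac:(lra) (or_intror H2)) in Hupos. lra. }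
      assert (Hm2 : (2 <= m)%nat).
      { destruct (Nat.eq_dec m 1) as [->|]; [|lia]. exfalso. unfold y, x0 in Hy. simpl in Hy.
        assert (0 <= c1 * s1) by nra. lra. }
      set (du := eps * (dPhi al be y * (- c1))).
      exists du, (Fop k s0 i0 tau eta lam (fun j => I j (s1 + 1)) m * 1).
      split.
      { apply (derivable_pt_lim_locally_ext (fun s => eps * Phi al be (INR m - c1 * s - x0)) (u m) s1
                 ((INR m - x0 - b) / c1) ((INR m - x0) / c1)).
        - split.
          + apply Rlt_div_l; [lra|]. unfold y in Hy. lra.
          + apply Rlt_div_r; [lra|]. unfold y in Hy. lra.
        - intros z [Hz1 Hz2]. unfold u, psi. rewrite clamp_id; auto.
          apply Rlt_div_l in Hz1; [|lra]. apply Rlt_div_r in Hz2; [|lra]. fold b. lra.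
        - unfold du. apply derivable_pt_lim_scal.
          apply (derivable_pt_lim_comp (fun s => INR m - c1 * s - x0) (Phi al be)).
          + apply is_derive_Reals. auto_derive; auto. ring.
          + apply Phi_deriv. }
      split; [apply (shift_deriv k s0 i0 tau eta lam I 1 m s1 Hs Hm); lra|].
      destruct (cp_hyp k s0 i0 tau eta lam 0 (fun j => u j s1) (fun j => I j (s1 + 1)) m du
                  (Fop k s0 i0 tau eta lam (fun j => I j (s1 + 1)) m * 1) Hs0 Htau Heta Hlam ltac:(lra) Hm)
        as [C1 C2]; simpl; try lra.
      +
        rewrite Fop_ge2 by auto.
        assert (Hid := Phi_identity k lam c1 al be a' y Hrel eq_refl).
        assert (Hum : u m s1 = eps * Phi al be y).
        { unfold u, psi. fold y. rewrite clamp_id; auto. fold b. lra. }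
        assert (Hprev : eps * Phi al be (y - 1) <= u (m - 1)%nat s1).
        { unfold u. rewrite minus_INR by lia. simpl INR.
          replace (INR m - 1 - c1 * s1 - x0) with (y - 1) by (unfold y; ring).
          apply Rmult_le_compat_l; [lra|]. apply psi_ge_Phi; [lra|]. fold b. lra. }
        assert (Hnext : eps * Phi al be (y + 1) <= u (S m) s1).
        { unfold u. rewrite S_INR.
          replace (INR m + 1 - c1 * s1 - x0) with (y + 1) by (unfold y; ring).
          apply Rmult_le_compat_l; [lra|]. apply psi_ge_Phi; [lra|]. fold b. lra. }
        assert (Hf := f_ge_quad s0 tau eta (u m s1) Hs0 Htau ltac:(lra)). fold a in Hf.
        assert (Hq : s0 * (tau * tau) * (u m s1 * u m s1) <= (a - a') * u m s1).
        { pose proof (Hub m s1). assert (s0 * (tau * tau) * u m s1 <= s0 * (tau * tau) * eps).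
          { apply Rmult_le_compat_l; [|lra]. apply Rmult_le_pos; nra. }
          assert (s0 * (tau * tau) * u m s1 <= a - a') by lra.
          replace (s0 * (tau * tau) * (u m s1 * u m s1)) with ((s0 * (tau * tau) * u m s1) * u m s1) by ring.
          apply Rmult_le_compat_r; lra. }
        assert (Hdu : du = eps * (- c1 * dPhi al be y)) by (unfold du; ring).
        rewrite Hdu, Hid. cbv beta.
        assert (lam * (eps * Phi al be (y - 1)) <= lam * u (m - 1)%nat s1) by (apply Rmult_le_compat_l; lra).
        assert (lam * INR k * (eps * Phi al be (y + 1)) <= lam * INR k * u (S m) s1) by (apply Rmult_le_compat_l; nra).
        set (um := u m s1) in *. set (up := u (m - 1)%nat s1) in *. set (un := u (S m) s1) in *.
        set (P0 := Phi al be y) in *. set (Pm := Phi al be (y - 1)) in *. set (Pp := Phi al be (y + 1)) in *.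
        assert (E1 : eps * (a' * P0 + lam * (Pm - (INR k + 1) * P0 + INR k * Pp)) =
                     a' * (eps * P0) + lam * (eps * Pm) - lam * (INR k + 1) * (eps * P0) + lam * INR k * (eps * Pp)) by ring.
        assert (E2 : lam * (up - (INR k + 1) * um + INR k * un) = lam * up - lam * (INR k + 1) * um + lam * INR k * un) by ring.
        rewrite E1, E2, <- Hum. lra.
      + split; auto.
    - lra. }
  set (ys := b / 2).
  assert (Hps : psi al be ys = exp (- al * ys)).
  { unfold psi, Phi. rewrite clamp_id by (unfold ys, b in *; lra).
    replace (be * ys) with (PI / 2) by (unfold ys, b; field; lra). rewrite sin_PI2. ring. }
  destruct (INR_archimed 1 (x0 + ys) ltac:(lra)) as [N1 HN1]. rewrite Rmult_1_r in HN1.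
  destruct (fin_min (fun n => I n 1) N1) as [d1 [Hd1 Hd1b]].
  { intros n Hn. apply (sol_pos k s0 i0 tau eta lam I Hp Hs); [lia|lra]. }
  exists (Rmin (eps * exp (- al * ys)) d1). split.
  { apply Rmin_pos; auto. apply Rmult_lt_0_compat; auto; apply exp_pos. }
  intros t n Ht Hn Hnt.
  destruct (Rle_or_lt (x0 + ys) (INR n)) as [Hbig|Hsmall].
  - set (sn := (INR n - x0 - ys) / c1).
    assert (Hsn : 0 <= sn) by (unfold sn; apply Rdiv_le_0_compat; lra).
    assert (Hsnt : sn + 1 <= t).
    { unfold sn. assert ((INR n - x0 - ys) / c1 <= t - 1); [|lra].
      apply Rle_div_l; [lra|]. assert (0 < ys) by (unfold ys; lra). unfold x0. lra. }
    specialize (Hcmp n sn Hn Hsn). unfold u in Hcmp.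
    replace (INR n - c1 * sn - x0) with ys in Hcmp by (unfold sn; field; lra).
    rewrite Hps in Hcmp.
    assert (Hmono := sol_mono k s0 i0 tau eta lam I Hp Hs n (sn + 1) (t - (sn + 1)) Hn ltac:(lra) ltac:(lra)).
    replace (sn + 1 + (t - (sn + 1))) with t in Hmono by ring.
    pose proof (Rmin_l (eps * exp (- al * ys)) d1). lra.
  - assert (HnN : (n <= N1)%nat).
    { destruct (Compare_dec.le_lt_dec n N1); auto. assert (INR N1 < INR n) by (apply lt_INR; auto). lra. }
    specialize (Hd1b n ltac:(lia)). simpl in Hd1b.
    assert (Hmono := sol_mono k s0 i0 tau eta lam I Hp Hs n 1 (t - 1) Hn ltac:(lra) ltac:(lra)).
    replace (1 + (t - 1)) with t in Hmono by ring.
    pose proof (Rmin_r (eps * exp (- al * ys)) d1). lra.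
Qed.

Lemma Rmin_mono_int th t0 e : t0 <= th <= 1 - e -> Rmin t0 e <= Rmin th (1 - th).
Proof. intros. unfold Rmin. repeat destruct (Rle_dec _ _); lra. Qed.

Lemma lift_main k s0 i0 tau eta lam I J M c c1 dl :
  Hpar k s0 i0 tau eta lam -> Hsol k s0 i0 tau eta lam I -> Hstat k s0 i0 tau eta lam J ->
  (forall n, (1 <= n)%nat -> J n <= M) -> 0 < c -> c < c1 -> 0 < dl -> dl <= M / 2 ->
  (forall n, (1 <= n)%nat -> dl <= J n) ->
  (forall t n, 1 <= t -> (1 <= n)%nat -> INR n <= c1 * t -> dl <= I n t) ->
  forall eps, 0 < eps -> exists T, forall t, T <= t ->
    forall n, (1 <= n)%nat -> INR n <= c * t -> J n - eps <= I n t.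
Proof.
  intros Hp Hs [HJ0 HJ] HM Hc Hc1 Hdl HdlM HdlJ Hspr eps Heps.
  pose proof Hs as [HB [H0 [Hr Hd]]].
  pose proof Hp as [Hk [Hs0 [Hi0 [Htau [Heta Hlam]]]]].
  pose proof (pos_INR k) as HkR.
  assert (HMp : 0 < M) by lra.
  set (th0 := dl / M).
  assert (Hth0 : 0 < th0 <= 1 / 2).
  { unfold th0. split. apply Rdiv_lt_0_compat; lra. apply Rle_div_l; lra. }
  assert (Hth0M : th0 * M = dl) by (unfold th0; field; lra).
  set (ep := Rmin (eps / (2 * M)) (1 / 4)).
  assert (Hep : 0 < ep <= 1 / 4).
  { unfold ep. split. apply Rmin_pos; [apply Rdiv_lt_0_compat; lra|lra]. apply Rmin_r. }
  assert (HepM : ep * M <= eps / 2).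
  { assert (ep <= eps / (2 * M)) by apply Rmin_l. apply Rle_div_r in H; [|lra]. lra. }
  set (q := (1 - exp (- tau * dl / 2)) * (1 - exp (- tau * dl / 2))).
  assert (Hq : 0 < q).
  { unfold q. assert (exp (- tau * dl / 2) < 1).
    { rewrite <- exp_0. apply exp_increasing. unfold Rdiv. assert (0 < tau * dl) by nra. nra. }
    nra. }
  set (kap := s0 * Rmin th0 ep * q / M).
  assert (Hmin : 0 < Rmin th0 ep) by (apply Rmin_pos; lra).
  assert (Hkap : 0 < kap).
  { unfold kap. apply Rdiv_lt_0_compat; [|lra]. apply Rmult_lt_0_compat; [apply Rmult_lt_0_compat|]; lra. }
  set (Tth := (1 - ep - th0) / kap).
  assert (HTth : 0 < Tth) by (unfold Tth; apply Rdiv_lt_0_compat; lra).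
  assert (HthT : th0 + kap * Tth = 1 - ep) by (unfold Tth; field; lra).
  set (K := s0 * tau + 3 * lam * (INR k + 1)).
  assert (HK : 0 < K) by (unfold K; nra).
  set (Z := K * Tth + c1 * Tth - ln (eps / (2 * dl))).
  set (T := Tth + 1 + Rmax 0 (Z / (c1 - c))).
  exists T. intros t Ht n Hn Hnt.
  assert (HZ : Z <= (c1 - c) * (t - Tth - 1)).
  { assert (Z / (c1 - c) <= t - Tth - 1) by (pose proof (Rmax_r 0 (Z / (c1 - c))); unfold T in Ht; lra).
    apply Rle_div_l in H; [|lra]. lra. }
  assert (Ht0 : 1 <= t - Tth) by (pose proof (Rmax_l 0 (Z / (c1 - c))); unfold T in Ht; lra).
  set (t0 := t - Tth) in *.
  set (R' := c1 * t0).
  set (u := fun (m : nat) (s : R) => (th0 + kap * s) * J m - dl * exp (K * s) * exp (INR m - R')).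
  assert (Hzeta : forall m s, 0 < dl * exp (K * s) * exp (INR m - R')).
  { intros. apply Rmult_lt_0_compat; [apply Rmult_lt_0_compat; [lra|apply exp_pos]|apply exp_pos]. }
  assert (Hcmp : u n Tth <= I n (Tth + t0)).
  { destruct (bound_pos I (Tth + t0) (HB (Tth + t0))) as [B [HB0 HBb]].
    apply (CP (s0 * tau * exp (tau * 0)) lam (lam * INR k) (lam * (INR k + 1)) Tth M
              u (fun m s => I m (s + t0))); auto.
    - left; apply Rmult_lt_0_compat; [nra|apply exp_pos].
    - lra.
    - nra.
    - nra.
    - lra.
    - intros m s Hm Hs'. unfold u.
      pose proof (sol_nonneg k s0 i0 tau eta lam I Hp Hs m (s + t0) Hm ltac:(lra)).
      specialize (Hzeta m s). specialize (HM m Hm). specialize (HJ0 m Hm).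
      assert ((th0 + kap * s) * J m <= 1 * M).
      { apply Rmult_le_compat; try nra. }
      lra.
    - intros m Hm. unfold u. rewrite Rplus_0_l, Rmult_0_r, Rplus_0_r, Rmult_0_r, exp_0, Rmult_1_r.
      specialize (HM m Hm). specialize (HJ0 m Hm).
      assert (th0 * J m <= dl) by (rewrite <- Hth0M; apply Rmult_le_compat_l; lra).
      destruct (Rle_or_lt (INR m) R') as [Hin|Hout].
      + assert (dl <= I m t0) by (apply Hspr; auto; lra).
        assert (0 < dl * exp (INR m - R')) by (apply Rmult_lt_0_compat; [lra|apply exp_pos]). lra.
      + assert (1 <= exp (INR m - R')) by (apply exp_ge1; lra).
        assert (dl <= dl * exp (INR m - R')) by nra.
        pose proof (sol_nonneg k s0 i0 tau eta lam I Hp Hs m t0 Hm ltac:(lra)). lra.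
    - intros m Hm. apply contw_sub.
      + apply contw_cont. intros s. apply derivable_continuous_pt. eexists.
        apply is_derive_Reals. unfold u. auto_derive; auto.
      + apply (shift_contw k s0 i0 tau eta lam I t0 m Tth Hs Hm); lra.
    - intros m s Hm Hs' Hlt.
      set (zm := dl * exp (K * s) * exp (INR m - R')).
      set (du := kap * J m - K * zm).
      exists du, (Fop k s0 i0 tau eta lam (fun j => I j (s + t0)) m * 1).
      split.
      { apply is_derive_Reals. unfold u, du, zm. auto_derive; auto. ring. }
      split; [apply (shift_deriv k s0 i0 tau eta lam I t0 m s Hs Hm); lra|].
      assert (Hv0 := sol_nonneg k s0 i0 tau eta lam I Hp Hs m (s + t0) Hm ltac:(lra)).
      destruct (cp_hyp k s0 i0 tau eta lam 0 (fun j => u j s) (fun j => I j (s + t0)) m du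
                  (Fop k s0 i0 tau eta lam (fun j => I j (s + t0)) m * 1) Hs0 Htau Heta Hlam ltac:(lra) Hm)
        as [C1 C2]; simpl; try lra.
      +
        set (th := th0 + kap * s).
        assert (Hth : th0 <= th <= 1 - ep).
        { unfold th. split. nra. rewrite <- HthT. apply Rplus_le_compat_l, Rmult_le_compat_l; lra. }
        assert (Hum : u m s = th * J m - zm) by reflexivity.
        assert (Hzp : 0 < zm) by apply Hzeta.
        assert (HJm := HJ0 m Hm). assert (HMm := HM m Hm). assert (HdJ := HdlJ m Hm).
        assert (Hgap := f_gap s0 tau eta th (J m) dl Hs0 Htau ltac:(lra) ltac:(lra)). fold q in Hgap.
        assert (Hgap2 : kap * J m <= s0 * Rmin th (1 - th) * q).
        { assert (kap * J m <= kap * M) by (apply Rmult_le_compat_l; lra).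
          assert (kap * M = s0 * Rmin th0 ep * q) by (unfold kap; field; lra).
          assert (s0 * Rmin th0 ep * q <= s0 * Rmin th (1 - th) * q).
          { apply Rmult_le_compat_r; [lra|]. apply Rmult_le_compat_l; [lra|]. apply Rmin_mono_int; lra. }
          lra. }
        assert (Hlip : freact s0 tau eta (th * J m) - freact s0 tau eta (th * J m - zm) <= s0 * tau * exp (tau * 0) * zm).
        { assert (H := f_lip s0 tau eta 0 (th * J m) (th * J m - zm) Hs0 Htau Heta ltac:(lra) ltac:(lra) ltac:(lra)).
          replace (th * J m - (th * J m - zm)) with zm in H by ring. auto. }
        rewrite Rmult_0_r, exp_0, Rmult_1_r in Hlip.
        assert (Hzm1 : dl * exp (K * s) * exp (INR (S m) - R') = zm * exp 1).
        { unfold zm. rewrite S_INR. replace (INR m + 1 - R') with ((INR m - R') + 1) by ring. rewrite exp_plus. ring. }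
        pose proof exp_le_3 as He3.
        assert (He1 : 1 <= exp 1) by (apply exp_ge1; lra).
        destruct (Nat.eq_dec m 1) as [->|Hne].
        * rewrite Fop_1. specialize (HJ 1%nat ltac:(lia)). rewrite Fop_1 in HJ.
          unfold u at 1 2 3. fold th. fold zm. rewrite Hzm1.
          assert (Hth1 : 0 <= (1 - th) * i0) by nra.
          unfold du, K.
          set (f1 := freact s0 tau eta (th * J 1%nat)) in *.
          set (f2 := freact s0 tau eta (th * J 1%nat - zm)) in *.
          set (fJ := freact s0 tau eta (J 1%nat)) in *.
          assert (E1 : lam * (INR k + 1) * (- (th * J 1%nat - zm) + (th * J 2%nat - zm * exp 1))
                 = th * (lam * (INR k + 1) * (- J 1%nat + J 2%nat)) + lam * (INR k + 1) * zm - lam * (INR k + 1) * (zm * exp 1)) by ring.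
          rewrite E1.
          assert (E2 : th * (lam * (INR k + 1) * (- J 1%nat + J 2%nat)) = - th * fJ - th * i0) by nra.
          assert (0 <= lam * (INR k + 1) * zm) by (apply Rmult_le_pos; nra).
          assert (lam * (INR k + 1) * (zm * exp 1) <= lam * (INR k + 1) * (zm * 3)).
          { apply Rmult_le_compat_l; nra. }
          assert (E3 : (s0 * tau + 3 * lam * (INR k + 1)) * zm = s0 * tau * zm + lam * (INR k + 1) * (zm * 3)) by ring.
          lra.
        * assert (Hm2 : (2 <= m)%nat) by lia.
          rewrite Fop_ge2 by auto. specialize (HJ m Hm). rewrite Fop_ge2 in HJ by auto.
          assert (Hzm0 : dl * exp (K * s) * exp (INR (m - 1) - R') = zm * exp (- 1)).
          { unfold zm. rewrite minus_INR by lia. simpl INR. replace (INR m - 1 - R') with ((INR m - R') + - 1) by ring.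
            rewrite exp_plus. ring. }
          assert (He0 : exp (- 1) <= 1) by (rewrite <- exp_0; apply exp_le_mono; lra).
          assert (He0p : 0 < exp (- 1)) by apply exp_pos.
          unfold u at 1 2 3 4. fold th. fold zm. rewrite Hzm1, Hzm0.
          unfold du, K.
          set (f1 := freact s0 tau eta (th * J m)) in *.
          set (f2 := freact s0 tau eta (th * J m - zm)) in *.
          set (fJ := freact s0 tau eta (J m)) in *.
          assert (E1 : lam * ((th * J (m - 1)%nat - zm * exp (- 1)) - (INR k + 1) * (th * J m - zm) + INR k * (th * J (S m) - zm * exp 1))
                 = th * (lam * (J (m - 1)%nat - (INR k + 1) * J m + INR k * J (S m)))
                   - lam * (zm * exp (- 1)) + lam * (INR k + 1) * zm - lam * INR k * (zm * exp 1)) by ring.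
          rewrite E1.
          assert (E2 : th * (lam * (J (m - 1)%nat - (INR k + 1) * J m + INR k * J (S m))) = - th * fJ) by nra.
          assert (lam * (zm * exp (- 1)) <= lam * zm) by (apply Rmult_le_compat_l; nra).
          assert (0 <= lam * (INR k + 1) * zm) by (apply Rmult_le_pos; nra).
          assert (lam * INR k * (zm * exp 1) <= lam * INR k * (zm * 3)) by (apply Rmult_le_compat_l; nra).
          assert (0 <= lam * (INR k + 1) * zm) by (apply Rmult_le_pos; nra).
          assert (E3 : (s0 * tau + 3 * lam * (INR k + 1)) * zm = s0 * tau * zm + 3 * lam * INR k * zm + 3 * lam * zm) by ring.
          assert (lam * INR k * (zm * 3) = 3 * lam * INR k * zm) by ring.
          assert (0 <= lam * zm) by nra.
          lra.
      + split; auto.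
    - lra. }
  unfold u in Hcmp. rewrite HthT in Hcmp.
  replace (Tth + t0) with t in Hcmp by (unfold t0; ring).
  assert (Hexp : dl * exp (K * Tth) * exp (INR n - R') <= eps / 2).
  { assert (Hx : K * Tth + (INR n - R') <= ln (eps / (2 * dl))).
    { unfold R', t0 in *. unfold Z in HZ.
      assert ((c1 - c) * (t - Tth - 1) <= (c1 - c) * t) by (apply Rmult_le_compat_l; lra).
      assert (E : c1 * (t - Tth) = c * t + (c1 - c) * t - c1 * Tth) by ring.
      lra. }
    rewrite Rmult_assoc, <- exp_plus.
    assert (exp (K * Tth + (INR n - R')) <= eps / (2 * dl)).
    { rewrite <- (exp_ln (eps / (2 * dl))) by (apply Rdiv_lt_0_compat; lra). apply exp_le_mono; auto. }
    apply (Rmult_le_compat_l dl) in H; [|lra].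
    replace (dl * (eps / (2 * dl))) with (eps / 2) in H by (field; lra). auto. }
  assert (HJn := HM n Hn). assert (HJn0 := HJ0 n Hn).
  assert (ep * J n <= eps / 2).
  { assert (ep * J n <= ep * M) by (apply Rmult_le_compat_l; lra). lra. }
  nra.
Qed.

Lemma part1 k s0 i0 tau eta lam I J :
  Hpar k s0 i0 tau eta lam -> Hsol k s0 i0 tau eta lam I -> Hstat k s0 i0 tau eta lam J ->
  (exists M, forall n, (1 <= n)%nat -> J n <= M) ->
  (2 <= k)%nat -> repro s0 tau eta > 1 -> lam < lambda_c k s0 tau eta ->
  forall c, 0 < c < c_star k s0 tau eta lam ->
     forall eps, 0 < eps -> exists T, forall t, T <= t ->
       forall n, (1 <= n)%nat -> INR n <= c * t -> Rabs (I n t - J n) <= eps.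
Proof.
  intros Hp Hs Hst [M HM] Hk Hr Hlc c [Hc0 Hc] eps Heps.
  pose proof Hp as [Hk1 [Hs0 [Hi0 [Htau [Heta Hlam]]]]].
  pose proof Hst as [HJ0 HJ].
  assert (Ha : 0 < s0 * tau - eta).
  { unfold repro in Hr. apply Rlt_div_r in Hr; lra. }
  destruct (cstar_props k s0 tau eta lam Hk Heta Hlam Hr Hlc) as [_ [_ Hsp]].
  set (c1 := (c + c_star k s0 tau eta lam) / 2).
  assert (Hc1 : c < c1 < c_star k s0 tau eta lam) by (unfold c1; lra).
  destruct (hump_sub k s0 i0 tau eta lam I c1 Hp Hs Ha ltac:(lra)) as [dl [Hdl Hspr]].
  { intros g Hg. apply Hsp; auto; lra. }
  assert (HMp : 0 < M) by (specialize (HJ0 1%nat ltac:(lia)); specialize (HM 1%nat ltac:(lia)); lra).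
  set (dl' := Rmin dl (M / 2)).
  assert (Hdl' : 0 < dl') by (apply Rmin_pos; lra).
  assert (Hdl'1 : dl' <= dl) by apply Rmin_l.
  assert (Hdl'2 : dl' <= M / 2) by apply Rmin_r.
  assert (HdJ : forall n, (1 <= n)%nat -> dl' <= J n).
  { intros n Hn. set (t := 1 + INR n / c1).
    assert (Ht : 1 <= t) by (unfold t; assert (0 <= INR n / c1) by (apply Rdiv_le_0_compat; [apply pos_INR|lra]); lra).
    assert (INR n <= c1 * t).
    { unfold t. rewrite Rmult_plus_distr_l. replace (c1 * (INR n / c1)) with (INR n) by (field; lra). lra. }
    specialize (Hspr t n Ht Hn H).
    pose proof (sol_le_stat k s0 i0 tau eta lam I J Hp Hs Hst n t Hn ltac:(lra)). lra. }
  destruct (lift_main k s0 i0 tau eta lam I J M c c1 dl' Hp Hs Hst HM Hc0 (proj1 Hc1) Hdl' Hdl'2 HdJ)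
    with (eps := eps) as [T HT]; auto.
  { intros t n Ht Hn Hnt. specialize (Hspr t n Ht Hn Hnt). lra. }
  exists (Rmax 0 T). intros t Ht n Hn Hnt.
  assert (Ht0 : 0 <= t) by (eapply Rle_trans; [apply Rmax_l|apply Ht]).
  assert (HT' : T <= t) by (eapply Rle_trans; [apply Rmax_r|apply Ht]).
  specialize (HT t HT' n Hn Hnt).
  pose proof (sol_le_stat k s0 i0 tau eta lam I J Hp Hs Hst n t Hn Ht0).
  apply Rabs_le. lra.
Qed.

Theorem theorem8 (k : nat) (s0 i0 tau eta lambda : R)
  (Iinf : nat -> R) (I : nat -> R -> R) :
  (2 <= k)%nat ->
  0 < s0 < 1 -> 0 < i0 < 1 -> 0 < tau -> 0 < eta -> 0 < lambda ->
  repro s0 tau eta > 1 ->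
  lambda < lambda_c k s0 tau eta ->
  (* Iinf : the positive bounded stationary solution (indices n >= 1) *)
  (forall n, (1 <= n)%nat -> 0 < Iinf n) ->
  (exists M, forall n, (1 <= n)%nat -> Iinf n <= M) ->
  (forall n, (2 <= n)%nat ->
     0 = freact s0 tau eta (Iinf n)
         + lambda * (Iinf (n - 1)%nat - (INR k + 1) * Iinf n + INR k * Iinf (S n))) ->
  0 = freact s0 tau eta (Iinf 1%nat) + i0
      + lambda * (INR k + 1) * (- Iinf 1%nat + Iinf 2%nat) ->
  (* I : the (locally-in-time bounded) solution of the Cauchy problem for t >= 0 *)
  (forall T, exists M, forall n t, (1 <= n)%nat -> 0 <= t <= T -> Rabs (I n t) <= M) ->
  (forall n, (1 <= n)%nat -> I n 0 = 0) ->
  (forall n, (1 <= n)%nat -> forall eps, 0 < eps ->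
     exists d, 0 < d /\ forall t, 0 <= t < d -> Rabs (I n t - I n 0) < eps) ->
  (forall n t, (2 <= n)%nat -> 0 < t ->
     derivable_pt_lim (I n) t
       (freact s0 tau eta (I n t)
        + lambda * (I (n - 1)%nat t - (INR k + 1) * I n t + INR k * I (S n) t))) ->
  (forall t, 0 < t ->
     derivable_pt_lim (I 1%nat) t
       (freact s0 tau eta (I 1%nat t) + i0
        + lambda * (INR k + 1) * (- I 1%nat t + I 2%nat t))) ->
  (* (i) *)
  (forall c, 0 < c < c_star k s0 tau eta lambda ->
     forall eps, 0 < eps -> exists T, forall t, T <= t ->
       forall n, (1 <= n)%nat -> INR n <= c * t -> Rabs (I n t - Iinf n) <= eps)
  /\
  (* (ii) *)
  (forall c, c > c_star k s0 tau eta lambda ->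
     forall eps, 0 < eps -> exists T, forall t, T <= t ->
       forall n, (1 <= n)%nat -> c * t <= INR n -> Rabs (I n t) <= eps).
Proof.
  intros Hk Hs0 Hi0 Htau Heta Hlam Hr Hlc HJ0 HM HJn HJ1 HB H0 Hr0 Hdn Hd1.
  assert (Hp : Hpar k s0 i0 tau eta lambda).
  { repeat split; try lra; lia. }
  assert (Hs : Hsol k s0 i0 tau eta lambda I).
  { split; [auto|split; [auto|split; [auto|]]].
    intros n t Hn Ht. destruct (Nat.eq_dec n 1) as [->|Hne].
    - rewrite Fop_1. apply Hd1; auto.
    - rewrite Fop_ge2 by lia. apply Hdn; auto; lia. }
  assert (Hst : Hstat k s0 i0 tau eta lambda Iinf).
  { split; auto. intros n Hn. destruct (Nat.eq_dec n 1) as [->|Hne].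
    - rewrite Fop_1. lra.
    - rewrite Fop_ge2 by lia. rewrite <- HJn by lia. auto. }
  split.
  - apply (part1 k s0 i0 tau eta lambda I Iinf Hp Hs Hst HM Hk Hr Hlc).
  - apply (part2 k s0 i0 tau eta lambda I Hp Hs Hk Hr Hlc).
Qed.
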